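(* Let $m\in\mathrm{Hol}(\mathbb{D})$ with $m(0)\neq0$, $\beta\in\mathbb{T}$, and $n\in\mathbb{N}$ such that $\beta^k\neq1$ for $k=1,\dots,n$. Let $T:\mathrm{Hol}(\mathbb{D})\to\mathrm{Hol}(\mathbb{D})$ be given by $(Tf)(z)=m(z)f(\beta z)$. Then for each $k=1,\dots,n$, there is no $f\in\mathrm{Hol}(\mathbb{D})$ with $\beta^km(0)f-Tf=e_k$; that is, $e_k\notin(\beta^km(0)\mathrm{Id}-T)\mathrm{Hol}(\mathbb{D})$.
   Context: $\mathbb{D}$ is the open unit disc, $\mathbb{T}$ the unit circle, $\mathrm{Hol}(\mathbb{D})$ the space of holomorphic functions on $\mathbb{D}$, and $e_k(z)=z^k$ for $k\in\mathbb{N}_0$. *)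

(* Defs.v *)
From Stdlib Require Import Reals.
From Coquelicot Require Import Coquelicot.
Open Scope C_scope.

Definition in_disc (z : C) : Prop := (Cmod z < 1)%R.

(* f ∈ Hol(D): complex differentiable at every point of D
   (Coquelicot's ex_derive over the AbsRing C, i.e. complex derivative).
   Functions are represented by total maps C -> C; only values on D matter. *)
Definition Hol (f : C -> C) : Prop := forall z : C, in_disc z -> ex_derive f z.

Definition e (k : nat) : C -> C := fun z => Cpow z k.

Definition Top (m : C -> C) (beta : C) (f : C -> C) : C -> C :=
  fun z => m z * f (beta * z).

(* Main.v *)
Require Import Defs.
From Stdlib Require Import Reals Lra Lia.
From Coquelicot Require Import Coquelicot.
Open Scope R_scope.

Definition CI (h : R -> C) (a b : R) : C :=
  (RInt (fun t => fst (h t)) a b, RInt (fun t => snd (h t)) a b).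

Definition CIex (h : R -> C) (a b : R) : Prop :=
  ex_RInt (fun t => fst (h t)) a b /\ ex_RInt (fun t => snd (h t)) a b.

Definition CC (h : R -> C) (x : R) : Prop :=
  forall eps, 0 < eps -> exists del, 0 < del /\
    forall y, Rabs (y - x) < del -> Cmod (Cminus (h y) (h x)) < eps.

Definition hasD (h : R -> C) (x : R) (d : C) : Prop :=
  is_derive (fun y => fst (h y)) x (fst d) /\ is_derive (fun y => snd (h y)) x (snd d).

Lemma abs_fst_le (z : C) : Rabs (fst z) <= Cmod z.
Proof. apply re_le_Cmod. Qed.

Lemma abs_snd_le (z : C) : Rabs (snd z) <= Cmod z.
Proof. pose proof (Rmax_Cmod z). pose proof (Rmax_r (Rabs (fst z)) (Rabs (snd z))). lra. Qed.

Lemma Cmod_le_sum (z : C) : Cmod z <= Rabs (fst z) + Rabs (snd z).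
Proof.
  unfold Cmod.
  pose proof (Rabs_pos (fst z)); pose proof (Rabs_pos (snd z)).
  rewrite <- (sqrt_pow2 (Rabs (fst z) + Rabs (snd z))) by lra.
  apply sqrt_le_1_alt.
  rewrite <- (pow2_abs (fst z)), <- (pow2_abs (snd z)). nra.
Qed.

Lemma CC_fst h x : CC h x -> continuous (fun y => fst (h y)) x.
Proof.
  intros H. apply continuity_pt_filterlim. intros eps Heps.
  destruct (H eps Heps) as [d [Hd Hy]]. exists d; split; auto.
  intros y [_ Hy']. unfold R_dist in *. simpl in *. unfold R_dist in *.
  specialize (Hy y Hy'). eapply Rle_lt_trans; [|exact Hy].
  replace (fst (h y) - fst (h x)) with (fst (Cminus (h y) (h x))) by (simpl; ring).
  apply abs_fst_le.
Qed.

Lemma CC_snd h x : CC h x -> continuous (fun y => snd (h y)) x.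
Proof.
  intros H. apply continuity_pt_filterlim. intros eps Heps.
  destruct (H eps Heps) as [d [Hd Hy]]. exists d; split; auto.
  intros y [_ Hy']. unfold R_dist in *. simpl in *. unfold R_dist in *.
  specialize (Hy y Hy'). eapply Rle_lt_trans; [|exact Hy].
  replace (snd (h y) - snd (h x)) with (snd (Cminus (h y) (h x))) by (simpl; ring).
  apply abs_snd_le.
Qed.

Lemma CIex_CC h a b : a <= b -> (forall x, a <= x <= b -> CC h x) -> CIex h a b.
Proof.
  intros Hab H. split; apply (ex_RInt_continuous (V:=R_CompleteNormedModule)); intros z Hz;
  rewrite Rmin_left in Hz by lra; rewrite Rmax_right in Hz by lra.
  apply CC_fst; auto. apply CC_snd; auto.
Qed.

Lemma CI_ext h1 h2 a b : (forall x, Rmin a b < x < Rmax a b -> h1 x = h2 x) ->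
  CI h1 a b = CI h2 a b.
Proof.
  intros H. unfold CI. f_equal; apply RInt_ext; intros x Hx; rewrite H; auto.
Qed.

Lemma CI_plus h1 h2 a b : CIex h1 a b -> CIex h2 a b ->
  CI (fun t => Cplus (h1 t) (h2 t)) a b = Cplus (CI h1 a b) (CI h2 a b).
Proof.
  intros [H1 H2] [H3 H4]. unfold CI, Cplus; simpl.
  f_equal.
  - exact (RInt_plus (V:=R_CompleteNormedModule) _ _ a b H1 H3).
  - exact (RInt_plus (V:=R_CompleteNormedModule) _ _ a b H2 H4).
Qed.

Lemma CIex_plus h1 h2 a b : CIex h1 a b -> CIex h2 a b ->
  CIex (fun t => Cplus (h1 t) (h2 t)) a b.
Proof.
  intros [H1 H2] [H3 H4]. split; simpl.
  - exact (ex_RInt_plus (V:=R_CompleteNormedModule) _ _ a b H1 H3).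
  - exact (ex_RInt_plus (V:=R_CompleteNormedModule) _ _ a b H2 H4).
Qed.

Lemma CI_scal (c : C) h a b : CIex h a b ->
  CI (fun t => Cmult c (h t)) a b = Cmult c (CI h a b).
Proof.
  intros [H1 H2]. unfold CI, Cmult; simpl. f_equal.
  - rewrite (RInt_ext (V:=R_CompleteNormedModule) _ (fun t => minus (scal (fst c) (fst (h t))) (scal (snd c) (snd (h t))))).
    2:{ intros; reflexivity. }
    rewrite (RInt_minus (V:=R_CompleteNormedModule)). 2,3: apply (ex_RInt_scal (V:=R_CompleteNormedModule)); auto.
    rewrite !(RInt_scal (V:=R_CompleteNormedModule)); auto.
  - rewrite (RInt_ext (V:=R_CompleteNormedModule) _ (fun t => plus (scal (fst c) (snd (h t))) (scal (snd c) (fst (h t))))).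
    2:{ intros; reflexivity. }
    rewrite (RInt_plus (V:=R_CompleteNormedModule)). 2,3: apply (ex_RInt_scal (V:=R_CompleteNormedModule)); auto.
    rewrite !(RInt_scal (V:=R_CompleteNormedModule)); auto.
Qed.

Lemma CIex_scal (c : C) h a b : CIex h a b -> CIex (fun t => Cmult c (h t)) a b.
Proof.
  intros [H1 H2]. split; simpl.
  - apply (ex_RInt_ext (V:=R_CompleteNormedModule) (fun t => minus (scal (fst c) (fst (h t))) (scal (snd c) (snd (h t))))).
    intros; reflexivity. apply (ex_RInt_minus (V:=R_CompleteNormedModule)); apply (ex_RInt_scal (V:=R_CompleteNormedModule)); auto.
  - apply (ex_RInt_ext (V:=R_CompleteNormedModule) (fun t => plus (scal (fst c) (snd (h t))) (scal (snd c) (fst (h t))))).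
    intros; reflexivity. apply (ex_RInt_plus (V:=R_CompleteNormedModule)); apply (ex_RInt_scal (V:=R_CompleteNormedModule)); auto.
Qed.

Lemma CI_opp h a b : CIex h a b -> CI (fun t => Copp (h t)) a b = Copp (CI h a b).
Proof.
  intros H. rewrite (CI_ext _ (fun t => Cmult (RtoC (-1)) (h t))).
  rewrite CI_scal; auto. unfold RtoC; apply injective_projections; simpl; ring.
  intros; unfold RtoC; apply injective_projections; simpl; ring.
Qed.

Lemma CIex_opp h a b : CIex h a b -> CIex (fun t => Copp (h t)) a b.
Proof.
  intros H. destruct (CIex_scal (RtoC (-1)) h a b H) as [H1 H2]. split.
  - eapply ex_RInt_ext; [|exact H1]. intros; simpl; ring.
  - eapply ex_RInt_ext; [|exact H2]. intros; simpl; ring.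
Qed.

Lemma CI_minus h1 h2 a b : CIex h1 a b -> CIex h2 a b ->
  CI (fun t => Cminus (h1 t) (h2 t)) a b = Cminus (CI h1 a b) (CI h2 a b).
Proof.
  intros H1 H2. unfold Cminus. rewrite CI_plus; auto. rewrite CI_opp; auto.
  apply CIex_opp; auto.
Qed.

Lemma CIex_minus h1 h2 a b : CIex h1 a b -> CIex h2 a b ->
  CIex (fun t => Cminus (h1 t) (h2 t)) a b.
Proof. intros. unfold Cminus. apply CIex_plus; auto. apply CIex_opp; auto. Qed.

Lemma CI_const (c : C) a b : CI (fun _ => c) a b = Cmult (RtoC (b - a)) c.
Proof.
  unfold CI. rewrite !RInt_const. unfold RtoC, Cmult; simpl.
  apply injective_projections; simpl; unfold scal; simpl; unfold mult; simpl; ring.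
Qed.

Lemma CI_Chasles h a b c : CIex h a b -> CIex h b c ->
  Cplus (CI h a b) (CI h b c) = CI h a c.
Proof.
  intros [H1 H2] [H3 H4]. unfold CI, Cplus; simpl. f_equal.
  - exact (RInt_Chasles (V:=R_CompleteNormedModule) _ a b c H1 H3).
  - exact (RInt_Chasles (V:=R_CompleteNormedModule) _ a b c H2 H4).
Qed.

Lemma CI_bound h a b M : a <= b -> CIex h a b ->
  (forall t, a <= t <= b -> Cmod (h t) <= M) -> Cmod (CI h a b) <= 2 * (b - a) * M.
Proof.
  intros Hab [H1 H2] HM.
  eapply Rle_trans. apply Cmod_le_sum. unfold CI; simpl.
  assert (A1 : Rabs (RInt (fun t => fst (h t)) a b) <= (b - a) * M).
  { apply abs_RInt_le_const; auto. intros t Ht. eapply Rle_trans. apply abs_fst_le. auto. }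
  assert (A2 : Rabs (RInt (fun t => snd (h t)) a b) <= (b - a) * M).
  { apply abs_RInt_le_const; auto. intros t Ht. eapply Rle_trans. apply abs_snd_le. auto. }
  lra.
Qed.

Lemma CI_FTC h dh a b : a <= b ->
  (forall x, a <= x <= b -> hasD h x (dh x)) ->
  (forall x, a <= x <= b -> CC dh x) ->
  CI dh a b = Cminus (h b) (h a).
Proof.
  intros Hab HD HC. unfold CI, Cminus, Cplus, Copp; simpl. f_equal.
  - apply is_RInt_unique.
    apply (is_RInt_derive (V:=R_CompleteNormedModule) (fun y => fst (h y)) (fun y => fst (dh y))).
    intros x Hx; rewrite Rmin_left in Hx by lra; rewrite Rmax_right in Hx by lra. apply HD; auto.
    intros x Hx; rewrite Rmin_left in Hx by lra; rewrite Rmax_right in Hx by lra. apply CC_fst; auto.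
  - apply is_RInt_unique.
    apply (is_RInt_derive (V:=R_CompleteNormedModule) (fun y => snd (h y)) (fun y => snd (dh y))).
    intros x Hx; rewrite Rmin_left in Hx by lra; rewrite Rmax_right in Hx by lra. apply HD; auto.
    intros x Hx; rewrite Rmin_left in Hx by lra; rewrite Rmax_right in Hx by lra. apply CC_snd; auto.
Qed.

Definition Ccont (g : C -> C) (z : C) : Prop :=
  forall eps, 0 < eps -> exists del, 0 < del /\
    forall u, Cmod (Cminus u z) < del -> Cmod (Cminus (g u) (g z)) < eps.

Lemma CC_iff h x : CC h x <->
  continuity_pt (fun y => fst (h y)) x /\ continuity_pt (fun y => snd (h y)) x.
Proof.
  split.
  - intros H; split; apply continuity_pt_filterlim; [apply CC_fst|apply CC_snd]; auto.
  - intros [H1 H2] eps Heps.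
    destruct (H1 (eps/2)) as [d1 [Hd1 P1]]; [lra|].
    destruct (H2 (eps/2)) as [d2 [Hd2 P2]]; [lra|].
    exists (Rmin d1 d2); split. apply Rmin_pos; auto.
    intros y Hy. destruct (Req_dec y x) as [->|Hne].
    + replace (Cminus (h x) (h x)) with (RtoC 0) by (unfold RtoC, Cminus, Cplus, Copp; apply injective_projections; simpl; ring).
      rewrite Cmod_0. lra.
    + eapply Rle_lt_trans. apply Cmod_le_sum.
      assert (Q1 : Rabs (fst (h y) - fst (h x)) < eps/2).
      { apply (P1 y). split. split; [exact I| intro E; apply Hne; auto]. unfold R_dist; simpl; unfold R_dist. pose proof (Rmin_l d1 d2). lra. }
      assert (Q2 : Rabs (snd (h y) - snd (h x)) < eps/2).
      { apply (P2 y). split. split; [exact I| intro E; apply Hne; auto]. unfold R_dist; simpl; unfold R_dist. pose proof (Rmin_r d1 d2). lra. }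
      unfold Cminus, Cplus, Copp; simpl; unfold Rminus in Q1, Q2; lra.
Qed.

Lemma CC_plus h1 h2 x : CC h1 x -> CC h2 x -> CC (fun y => Cplus (h1 y) (h2 y)) x.
Proof.
  rewrite !CC_iff. intros [A1 A2] [B1 B2]. simpl. split; apply continuity_pt_plus; auto.
Qed.

Lemma CC_mult h1 h2 x : CC h1 x -> CC h2 x -> CC (fun y => Cmult (h1 y) (h2 y)) x.
Proof.
  rewrite !CC_iff. intros [A1 A2] [B1 B2]. simpl. split.
  - apply continuity_pt_minus; apply continuity_pt_mult; auto.
  - apply continuity_pt_plus; apply continuity_pt_mult; auto.
Qed.

Lemma CC_const (c : C) x : CC (fun _ => c) x.
Proof. rewrite CC_iff. split; apply continuity_pt_const; intros ? ?; reflexivity. Qed.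

Lemma CC_comp g h x : Ccont g (h x) -> CC h x -> CC (fun y => g (h y)) x.
Proof.
  intros Hg Hh eps Heps. destruct (Hg eps Heps) as [d [Hd P]].
  destruct (Hh d Hd) as [d' [Hd' P']]. exists d'; split; auto.
Qed.

Lemma hasD_CC h x d : hasD h x d -> CC h x.
Proof.
  intros [H1 H2]. rewrite CC_iff. split; apply continuity_pt_filterlim;
  apply (ex_derive_continuous (K:=R_AbsRing) (V:=R_NormedModule)); eexists; eauto.
Qed.

Lemma hasD_ext h1 h2 x d : (forall y, h1 y = h2 y) -> hasD h1 x d -> hasD h2 x d.
Proof.
  intros E [H1 H2]. split.
  - eapply is_derive_ext; [|exact H1]. intros; simpl; rewrite E; auto.
  - eapply is_derive_ext; [|exact H2]. intros; simpl; rewrite E; auto.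
Qed.

Lemma hasD_const (c : C) x : hasD (fun _ => c) x (RtoC 0).
Proof. split; simpl; apply (is_derive_const (K:=R_AbsRing) (V:=R_NormedModule)). Qed.

Lemma hasD_plus h1 h2 x d1 d2 : hasD h1 x d1 -> hasD h2 x d2 ->
  hasD (fun y => Cplus (h1 y) (h2 y)) x (Cplus d1 d2).
Proof.
  intros [A1 A2] [B1 B2]. split; simpl.
  - apply (is_derive_plus (K:=R_AbsRing) (V:=R_NormedModule) _ _ _ _ _ A1 B1).
  - apply (is_derive_plus (K:=R_AbsRing) (V:=R_NormedModule) _ _ _ _ _ A2 B2).
Qed.

Lemma hasD_mult h1 h2 x d1 d2 : hasD h1 x d1 -> hasD h2 x d2 ->
  hasD (fun y => Cmult (h1 y) (h2 y)) x (Cplus (Cmult d1 (h2 x)) (Cmult (h1 x) d2)).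
Proof.
  intros [A1 A2] [B1 B2].
  assert (M : forall n m : R_AbsRing, mult n m = mult m n) by (intros; apply Rmult_comm).
  split; simpl.
  - pose proof (is_derive_minus (K:=R_AbsRing) (V:=R_NormedModule) _ _ _ _ _
      (is_derive_mult _ _ _ _ _ A1 B1 M) (is_derive_mult _ _ _ _ _ A2 B2 M)) as P.
    simpl in P. unfold minus, plus, opp, mult in P; simpl in P.
    eapply is_derive_ext in P. 2: intros; reflexivity.
    replace (fst d1 * fst (h2 x) - snd d1 * snd (h2 x) + (fst (h1 x) * fst d2 - snd (h1 x) * snd d2))
      with (fst d1 * fst (h2 x) + fst (h1 x) * fst d2 + - (snd d1 * snd (h2 x) + snd (h1 x) * snd d2)) by ring.
    exact P.
  - pose proof (is_derive_plus (K:=R_AbsRing) (V:=R_NormedModule) _ _ _ _ _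
      (is_derive_mult _ _ _ _ _ A1 B2 M) (is_derive_mult _ _ _ _ _ A2 B1 M)) as P.
    simpl in P. unfold minus, plus, opp, mult in P; simpl in P.
    replace (fst d1 * snd (h2 x) + snd d1 * fst (h2 x) + (fst (h1 x) * snd d2 + snd (h1 x) * fst d2))
      with (fst d1 * snd (h2 x) + fst (h1 x) * snd d2 + (snd d1 * fst (h2 x) + snd (h1 x) * fst d2)) by ring.
    exact P.
Qed.

Definition Dif (g : C -> C) (z0 d : C) : Prop :=
  forall eps, 0 < eps -> exists del, 0 < del /\ forall z, Cmod (Cminus z z0) < del ->
    Cmod (Cminus (Cminus (g z) (g z0)) (Cmult d (Cminus z z0))) <= eps * Cmod (Cminus z z0).

Lemma Dif_of_derive g z0 d : is_derive (K:=C_AbsRing) (V:=C_NormedModule) g z0 d -> Dif g z0 d.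
Proof.
  intros [_ H] eps Heps.
  assert (L : is_filter_lim (locally z0) z0) by (intros P HP; exact HP).
  specialize (H z0 L (mkposreal eps Heps)). destruct H as [e He].
  exists e; split. apply cond_pos. intros z Hz.
  specialize (He z). unfold ball in He. simpl in He. unfold prod_ball in He. unfold ball in He; simpl in He.
  unfold AbsRing_ball in He. unfold norm, minus, plus, opp, scal in He; simpl in He.
  unfold Cminus. rewrite Cmult_comm. apply He. exact Hz.
Qed.

Lemma Cmod_minus_sym a b : Cmod (Cminus a b) = Cmod (Cminus b a).
Proof.
  replace (Cminus b a) with (Copp (Cminus a b)). apply eq_sym, Cmod_opp.
  apply injective_projections; simpl; ring.
Qed.

Lemma Cmod_rev_tri a b : Cmod a - Cmod b <= Cmod (Cminus a b).
Proof.
  pose proof (Cmod_triangle (Cminus a b) b).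
  replace (Cplus (Cminus a b) b) with a in H. lra.
  apply injective_projections; simpl; ring.
Qed.

Lemma Cmod_tri3 a b c : Cmod (Cplus a (Cplus b c)) <= Cmod a + Cmod b + Cmod c.
Proof.
  pose proof (Cmod_triangle a (Cplus b c)). pose proof (Cmod_triangle b c). lra.
Qed.

Lemma Dif_Ccont g z0 d : Dif g z0 d -> Ccont g z0.
Proof.
  intros H eps Heps.
  destruct (H 1 Rlt_0_1) as [del [Hdel P]].
  exists (Rmin del (eps / (Cmod d + 2))). split.
  { apply Rmin_pos; auto. apply Rdiv_lt_0_compat; auto. pose proof (Cmod_ge_0 d); lra. }
  intros u Hu. pose proof (Rmin_l del (eps / (Cmod d + 2))).
  pose proof (Rmin_r del (eps / (Cmod d + 2))).
  specialize (P u ltac:(lra)).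
  pose proof (Cmod_triangle (Cminus (Cminus (g u) (g z0)) (Cmult d (Cminus u z0))) (Cmult d (Cminus u z0))).
  replace (Cplus (Cminus (Cminus (g u) (g z0)) (Cmult d (Cminus u z0))) (Cmult d (Cminus u z0)))
    with (Cminus (g u) (g z0)) in H2 by (apply injective_projections; simpl; ring).
  rewrite Cmod_mult in H2.
  pose proof (Cmod_ge_0 d). pose proof (Cmod_ge_0 (Cminus u z0)).
  assert (Cmod (Cminus u z0) * (Cmod d + 2) < eps).
  { apply (Rmult_lt_reg_r (/ (Cmod d + 2))). apply Rinv_0_lt_compat; lra.
    rewrite Rmult_assoc, Rinv_r by lra. unfold Rdiv in H1. lra. }
  nra.
Qed.

Lemma Dif_mult g1 g2 z0 d1 d2 : Dif g1 z0 d1 -> Dif g2 z0 d2 ->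
  Dif (fun z => Cmult (g1 z) (g2 z)) z0 (Cplus (Cmult d1 (g2 z0)) (Cmult (g1 z0) d2)).
Proof.
  intros H1 H2 eps Heps.
  set (A := Cmod (g2 z0) + 1). set (B := Cmod d1 + 1). set (G := Cmod (g1 z0) + 1).
  assert (HA : 0 < A) by (unfold A; pose proof (Cmod_ge_0 (g2 z0)); lra).
  assert (HB : 0 < B) by (unfold B; pose proof (Cmod_ge_0 d1); lra).
  assert (HG : 0 < G) by (unfold G; pose proof (Cmod_ge_0 (g1 z0)); lra).
  destruct (H1 (eps / (3 * A))) as [e1 [He1 P1]]. apply Rdiv_lt_0_compat; lra.
  destruct (H2 (eps / (3 * G))) as [e2 [He2 P2]]. apply Rdiv_lt_0_compat; lra.
  destruct (Dif_Ccont _ _ _ H2 (Rmin 1 (eps / (3 * B)))) as [e3 [He3 P3]].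
  { apply Rmin_pos. lra. apply Rdiv_lt_0_compat; lra. }
  exists (Rmin e1 (Rmin e2 e3)). split. repeat apply Rmin_pos; auto.
  intros z Hz.
  pose proof (Rmin_l e1 (Rmin e2 e3)). pose proof (Rmin_r e1 (Rmin e2 e3)).
  pose proof (Rmin_l e2 e3). pose proof (Rmin_r e2 e3).
  specialize (P1 z ltac:(lra)). specialize (P2 z ltac:(lra)). specialize (P3 z ltac:(lra)).
  set (D := Cminus z z0) in *.
  replace (Cminus (Cminus (Cmult (g1 z) (g2 z)) (Cmult (g1 z0) (g2 z0)))
      (Cmult (Cplus (Cmult d1 (g2 z0)) (Cmult (g1 z0) d2)) D))
    with (Cplus (Cmult (Cminus (Cminus (g1 z) (g1 z0)) (Cmult d1 D)) (g2 z))
           (Cplus (Cmult (Cmult d1 D) (Cminus (g2 z) (g2 z0)))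
                  (Cmult (g1 z0) (Cminus (Cminus (g2 z) (g2 z0)) (Cmult d2 D)))))
    by (apply injective_projections; simpl; ring).
  eapply Rle_trans. apply Cmod_tri3. rewrite !Cmod_mult.
  pose proof (Rmin_l 1 (eps / (3 * B))). pose proof (Rmin_r 1 (eps / (3 * B))).
  assert (Hg2 : Cmod (g2 z) <= A).
  { pose proof (Cmod_rev_tri (g2 z) (g2 z0)). unfold A. lra. }
  pose proof (Cmod_ge_0 D). pose proof (Cmod_ge_0 d1). pose proof (Cmod_ge_0 (g1 z0)).
  pose proof (Cmod_ge_0 (g2 z)).
  pose proof (Cmod_ge_0 (Cminus (Cminus (g1 z) (g1 z0)) (Cmult d1 D))).
  assert (T1 : Cmod (Cminus (Cminus (g1 z) (g1 z0)) (Cmult d1 D)) * Cmod (g2 z) <= eps / 3 * Cmod D).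
  { eapply Rle_trans. apply Rmult_le_compat_l. auto. exact Hg2.
    eapply Rle_trans. apply Rmult_le_compat_r. lra. exact P1.
    right. field. lra. }
  assert (T2 : Cmod d1 * Cmod D * Cmod (Cminus (g2 z) (g2 z0)) <= eps / 3 * Cmod D).
  { assert (Cmod (Cminus (g2 z) (g2 z0)) <= eps / (3 * B)) by lra.
    pose proof (Cmod_ge_0 (Cminus (g2 z) (g2 z0))).
    apply Rle_trans with (B * Cmod D * (eps / (3 * B))).
    apply Rmult_le_compat; try nra. unfold B; nra.
    right. field. lra. }
  assert (T3 : Cmod (g1 z0) * Cmod (Cminus (Cminus (g2 z) (g2 z0)) (Cmult d2 D)) <= eps / 3 * Cmod D).
  { apply Rle_trans with (G * (eps / (3 * G) * Cmod D)).
    apply Rmult_le_compat; try lra. apply Cmod_ge_0. unfold G; lra.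
    right. field. lra. }
  lra.
Qed.

Lemma Dif_inv w z0 : z0 <> w ->
  Dif (fun z => Cinv (Cminus z w)) z0 (Copp (Cinv (Cmult (Cminus z0 w) (Cminus z0 w)))).
Proof.
  intros Hne eps Heps.
  assert (Hw : Cminus z0 w <> RtoC 0).
  { intros E. apply Hne. apply injective_projections;
    [pose proof (f_equal fst E) as E'|pose proof (f_equal snd E) as E']; simpl in E'; lra. }
  set (r := Cmod (Cminus z0 w)).
  assert (Hr : 0 < r) by (apply Cmod_gt_0; auto).
  exists (Rmin (r / 2) (eps * r ^ 3 / 2)). split.
  { apply Rmin_pos. lra. apply Rdiv_lt_0_compat; [|lra]. apply Rmult_lt_0_compat; auto. apply pow_lt; auto. }
  intros z Hz. pose proof (Rmin_l (r / 2) (eps * r ^ 3 / 2)). pose proof (Rmin_r (r / 2) (eps * r ^ 3 / 2)).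
  assert (Hzw : Cmod (Cminus z w) >= r / 2).
  { pose proof (Cmod_rev_tri (Cminus z0 w) (Cminus z0 z)).
    replace (Cminus (Cminus z0 w) (Cminus z0 z)) with (Cminus z w) in H1 by (apply injective_projections; simpl; ring).
    rewrite (Cmod_minus_sym z0 z) in H1. fold r in H1. lra. }
  assert (Hzw' : Cminus z w <> RtoC 0).
  { intro E. rewrite E, Cmod_0 in Hzw. lra. }
  replace (Cminus (Cminus (Cinv (Cminus z w)) (Cinv (Cminus z0 w)))
            (Cmult (Copp (Cinv (Cmult (Cminus z0 w) (Cminus z0 w)))) (Cminus z z0)))
    with (Cmult (Cmult (Cminus z z0) (Cminus z z0)) (Cinv (Cmult (Cminus z w) (Cmult (Cminus z0 w) (Cminus z0 w))))).
  2:{ field. split; auto. }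
  rewrite Cmod_mult, Cmod_inv. rewrite !Cmod_mult. fold r.
  2:{ repeat apply Cmult_neq_0; auto. }
  set (q := Cmod (Cminus z z0)) in *. set (s := Cmod (Cminus z w)) in *.
  assert (Hq : 0 <= q) by apply Cmod_ge_0.
  assert (Hs : 0 < s) by lra.
  assert (K : / (s * (r * r)) <= 2 / (r * r * r)).
  { replace (2 / (r * r * r)) with (/ (r / 2 * (r * r))) by (field; lra).
    apply Rinv_le_contravar. apply Rmult_lt_0_compat; [lra| apply Rmult_lt_0_compat; lra]. apply Rmult_le_compat_r; [apply Rlt_le, Rmult_lt_0_compat; lra| lra]. }
  assert (Kq : q <= eps * r ^ 3 / 2) by lra.
  assert (Kp : 0 <= / (s * (r * r))) by (apply Rlt_le, Rinv_0_lt_compat; apply Rmult_lt_0_compat; [lra | apply Rmult_lt_0_compat; lra]).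
  apply Rle_trans with (q * q * (2 / (r * r * r))).
  { apply Rmult_le_compat_l; [nra | exact K]. }
  replace (q * q * (2 / (r * r * r))) with (q * (2 / (r * r * r)) * q) by ring.
  apply Rmult_le_compat_r; auto.
  apply Rle_trans with ((eps * r ^ 3 / 2) * (2 / (r * r * r))).
  apply Rmult_le_compat_r. apply Rlt_le, Rdiv_lt_0_compat; [lra|]. nra. lra.
  right. field. lra.
Qed.

Lemma Cmod_4 (x y z w : C) : Cmod (Cplus (Cminus x y) (Cminus z w)) <= Cmod x + Cmod y + Cmod z + Cmod w.
Proof.
  pose proof (Cmod_triangle (Cminus x y) (Cminus z w)).
  pose proof (Cmod_triangle x (Copp y)). pose proof (Cmod_triangle z (Copp w)).
  rewrite Cmod_opp in H0, H1. unfold Cminus in *. lra.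
Qed.

Lemma hasD_eqd h x d1 d2 : hasD h x d1 -> d1 = d2 -> hasD h x d2.
Proof. intros H ->; auto. Qed.

Section Goursat.
Variables (G Gs Gt : R -> R -> C) (g : C -> C) (a b c d L : R).
Hypothesis Hab : a < b.
Hypothesis Hcd : c < d.
Hypothesis HL : 0 < L.
Hypothesis HGs : forall s t, hasD (fun s' => G s' t) s (Gs s t).
Hypothesis HGt : forall s t, hasD (fun t' => G s t') t (Gt s t).
Hypothesis HCs : forall s t, CC (fun s' => Gs s' t) s.
Hypothesis HCt : forall s t, CC (fun t' => Gt s t') t.
Definition inR s t := a <= s <= b /\ c <= t <= d.
Hypothesis HLip : forall s t s' t', inR s t -> inR s' t' ->
  Cmod (Cminus (G s t) (G s' t')) <= L * (Rabs (s - s') + Rabs (t - t')).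
Hypothesis HBs : forall s t, inR s t -> Cmod (Gs s t) <= L.
Hypothesis HBt : forall s t, inR s t -> Cmod (Gt s t) <= L.
Hypothesis Hg : forall s t, inR s t -> exists dg, Dif g (G s t) dg.

Definition adm (h : C -> C) := forall s t, inR s t ->
  CC (fun s' => h (G s' t)) s /\ CC (fun t' => h (G s t')) t.

Definition eta (h : C -> C) (s1 s2 t1 t2 : R) : C :=
  Cplus (Cminus (CI (fun s => Cmult (h (G s t1)) (Gs s t1)) s1 s2)
                (CI (fun s => Cmult (h (G s t2)) (Gs s t2)) s1 s2))
        (Cminus (CI (fun t => Cmult (h (G s2 t)) (Gt s2 t)) t1 t2)
                (CI (fun t => Cmult (h (G s1 t)) (Gt s1 t)) t1 t2)).

Definition sub s1 s2 t1 t2 := a <= s1 <= s2 /\ s2 <= b /\ c <= t1 <= t2 /\ t2 <= d.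

Lemma ex_s h : adm h -> forall t s1 s2, c <= t <= d -> a <= s1 <= s2 -> s2 <= b ->
  CIex (fun s => Cmult (h (G s t)) (Gs s t)) s1 s2.
Proof.
  intros Hh t s1 s2 Ht H1 H2. apply CIex_CC. lra.
  intros x Hx. apply CC_mult. apply (Hh x t). split; lra. apply HCs.
Qed.

Lemma ex_t h : adm h -> forall s t1 t2, a <= s <= b -> c <= t1 <= t2 -> t2 <= d ->
  CIex (fun t => Cmult (h (G s t)) (Gt s t)) t1 t2.
Proof.
  intros Hh s t1 t2 Hs H1 H2. apply CIex_CC. lra.
  intros x Hx. apply CC_mult. apply (Hh s x). split; lra. apply HCt.
Qed.

Lemma eta_split_s h s1 sm s2 t1 t2 : adm h -> sub s1 s2 t1 t2 -> s1 <= sm <= s2 ->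
  eta h s1 s2 t1 t2 = Cplus (eta h s1 sm t1 t2) (eta h sm s2 t1 t2).
Proof.
  intros Hh [Q1 [Q2 [Q3 Q4]]] Hm. unfold eta.
  rewrite <- (CI_Chasles (fun s => Cmult (h (G s t1)) (Gs s t1)) s1 sm s2).
  rewrite <- (CI_Chasles (fun s => Cmult (h (G s t2)) (Gs s t2)) s1 sm s2).
  ring.
  all: apply ex_s; auto; lra.
Qed.

Lemma eta_split_t h s1 s2 t1 tm t2 : adm h -> sub s1 s2 t1 t2 -> t1 <= tm <= t2 ->
  eta h s1 s2 t1 t2 = Cplus (eta h s1 s2 t1 tm) (eta h s1 s2 tm t2).
Proof.
  intros Hh [Q1 [Q2 [Q3 Q4]]] Hm. unfold eta.
  rewrite <- (CI_Chasles (fun t => Cmult (h (G s2 t)) (Gt s2 t)) t1 tm t2).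
  rewrite <- (CI_Chasles (fun t => Cmult (h (G s1 t)) (Gt s1 t)) t1 tm t2).
  ring.
  all: apply ex_t; auto; lra.
Qed.

Lemma eta_minus h1 h2 s1 s2 t1 t2 : adm h1 -> adm h2 -> sub s1 s2 t1 t2 ->
  eta (fun z => Cminus (h1 z) (h2 z)) s1 s2 t1 t2 = Cminus (eta h1 s1 s2 t1 t2) (eta h2 s1 s2 t1 t2).
Proof.
  intros H1 H2 [Q1 [Q2 [Q3 Q4]]]. unfold eta.
  rewrite (CI_ext (fun s => Cmult (Cminus (h1 (G s t1)) (h2 (G s t1))) (Gs s t1))
    (fun s => Cminus (Cmult (h1 (G s t1)) (Gs s t1)) (Cmult (h2 (G s t1)) (Gs s t1)))).
  2: intros; ring.
  rewrite (CI_ext (fun s => Cmult (Cminus (h1 (G s t2)) (h2 (G s t2))) (Gs s t2))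
    (fun s => Cminus (Cmult (h1 (G s t2)) (Gs s t2)) (Cmult (h2 (G s t2)) (Gs s t2)))).
  2: intros; ring.
  rewrite (CI_ext (fun t => Cmult (Cminus (h1 (G s2 t)) (h2 (G s2 t))) (Gt s2 t))
    (fun t => Cminus (Cmult (h1 (G s2 t)) (Gt s2 t)) (Cmult (h2 (G s2 t)) (Gt s2 t)))).
  2: intros; ring.
  rewrite (CI_ext (fun t => Cmult (Cminus (h1 (G s1 t)) (h2 (G s1 t))) (Gt s1 t))
    (fun t => Cminus (Cmult (h1 (G s1 t)) (Gt s1 t)) (Cmult (h2 (G s1 t)) (Gt s1 t)))).
  2: intros; ring.
  rewrite !CI_minus.
  ring.
  all: match goal with
       | |- CIex (fun _ => Cmult _ (Gs _ ?t)) ?x ?y => refine (ex_s _ _ t x y _ _ _); [assumption|lra..]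
       | |- CIex (fun _ => Cmult _ (Gt ?s _)) ?x ?y => refine (ex_t _ _ s x y _ _ _); [assumption|lra..]
       end.
Qed.

Definition aff (al be : C) (z : C) : C := Cplus al (Cmult be z).
Definition Phi (al be : C) (z : C) : C :=
  Cplus (Cmult al z) (Cmult (Cmult be (RtoC (/2))) (Cmult z z)).

Lemma hasD_Phi al be h x dh : hasD h x dh ->
  hasD (fun y => Phi al be (h y)) x (Cmult (aff al be (h x)) dh).
Proof.
  intros H. unfold Phi.
  eapply hasD_eqd.
  apply hasD_plus. apply hasD_mult. apply hasD_const. exact H.
  apply hasD_mult. apply hasD_const. apply hasD_mult; exact H.
  unfold aff. apply injective_projections; simpl; field.
Qed.

Lemma adm_aff al be : adm (aff al be).
Proof.
  intros s t _. unfold aff. split.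
  - apply CC_plus. apply CC_const. apply CC_mult. apply CC_const. eapply hasD_CC; apply HGs.
  - apply CC_plus. apply CC_const. apply CC_mult. apply CC_const. eapply hasD_CC; apply HGt.
Qed.

Lemma eta_aff al be s1 s2 t1 t2 : sub s1 s2 t1 t2 -> eta (aff al be) s1 s2 t1 t2 = RtoC 0.
Proof.
  intros [Q1 [Q2 [Q3 Q4]]]. unfold eta.
  assert (Es : forall t, c <= t <= d -> CI (fun s => Cmult (aff al be (G s t)) (Gs s t)) s1 s2
     = Cminus (Phi al be (G s2 t)) (Phi al be (G s1 t))).
  { intros t Ht. apply (CI_FTC (fun s => Phi al be (G s t))). lra.
    intros x Hx. apply (hasD_Phi al be (fun s => G s t) x (Gs x t) (HGs x t)).
    intros x Hx. apply CC_mult. apply adm_aff. split; lra. apply HCs. }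
  assert (Et : forall s, a <= s <= b -> CI (fun t => Cmult (aff al be (G s t)) (Gt s t)) t1 t2
     = Cminus (Phi al be (G s t2)) (Phi al be (G s t1))).
  { intros s Hs. apply (CI_FTC (fun t => Phi al be (G s t))). lra.
    intros x Hx. apply (hasD_Phi al be (fun t => G s t) x (Gt s x) (HGt s x)).
    intros x Hx. apply CC_mult. apply adm_aff. split; lra. apply HCt. }
  rewrite Es, Es, Et, Et by lra. ring.
Qed.

Lemma eta_bound h M s1 s2 t1 t2 : adm h -> sub s1 s2 t1 t2 ->
  (forall s t, s1 <= s <= s2 -> t1 <= t <= t2 -> Cmod (h (G s t)) <= M) ->
  Cmod (eta h s1 s2 t1 t2) <= 4 * L * M * ((s2 - s1) + (t2 - t1)).
Proof.
  intros Hh [Q1 [Q2 [Q3 Q4]]] HM.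
  assert (M0 : 0 <= M). { eapply Rle_trans. apply Cmod_ge_0. apply (HM s1 t1); lra. }
  unfold eta. eapply Rle_trans. apply Cmod_4.
  assert (Bs : forall t, t1 <= t <= t2 -> Cmod (CI (fun s => Cmult (h (G s t)) (Gs s t)) s1 s2) <= 2 * (s2 - s1) * (M * L)).
  { intros t Ht. apply CI_bound. lra. apply ex_s; auto; lra.
    intros s Hs. rewrite Cmod_mult. apply Rmult_le_compat. apply Cmod_ge_0. apply Cmod_ge_0.
    apply HM; lra. apply HBs. split; lra. }
  assert (Bt : forall s, s1 <= s <= s2 -> Cmod (CI (fun t => Cmult (h (G s t)) (Gt s t)) t1 t2) <= 2 * (t2 - t1) * (M * L)).
  { intros s Hs. apply CI_bound. lra. apply ex_t; auto; lra.
    intros t Ht. rewrite Cmod_mult. apply Rmult_le_compat. apply Cmod_ge_0. apply Cmod_ge_0.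
    apply HM; lra. apply HBt. split; lra. }
  pose proof (Bs t1 ltac:(lra)). pose proof (Bs t2 ltac:(lra)).
  pose proof (Bt s1 ltac:(lra)). pose proof (Bt s2 ltac:(lra)).
  lra.
Qed.


Lemma CC_minus' h1 h2 x : CC h1 x -> CC h2 x -> CC (fun y => Cminus (h1 y) (h2 y)) x.
Proof.
  rewrite !CC_iff. intros [A1 A2] [B1 B2]. simpl. split; apply continuity_pt_minus; auto.
Qed.

Lemma adm_g : adm g.
Proof.
  intros s t Hst. destruct (Hg s t Hst) as [dg Hd]. pose proof (Dif_Ccont _ _ _ Hd) as Hc.
  split.
  - apply (CC_comp g (fun s' => G s' t)); auto. eapply hasD_CC; apply HGs.
  - apply (CC_comp g (fun t' => G s t')); auto. eapply hasD_CC; apply HGt.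
Qed.

Lemma adm_minus h1 h2 : adm h1 -> adm h2 -> adm (fun z => Cminus (h1 z) (h2 z)).
Proof.
  intros H1 H2 s t Hst. destruct (H1 s t Hst), (H2 s t Hst). split; apply CC_minus'; auto.
Qed.

Lemma eta_local s0 t0 : inR s0 t0 -> forall eps, 0 < eps -> exists del, 0 < del /\
  forall s1 s2 t1 t2, sub s1 s2 t1 t2 -> s1 <= s0 <= s2 -> t1 <= t0 <= t2 ->
  (s2 - s1) + (t2 - t1) < del ->
  Cmod (eta g s1 s2 t1 t2) <= eps * ((s2 - s1) + (t2 - t1)) ^ 2.
Proof.
  intros H0 eps Heps.
  destruct (Hg s0 t0 H0) as [dg Hdg].
  set (z0 := G s0 t0).
  set (al := Cminus (g z0) (Cmult dg z0)).
  destruct (Hdg (eps / (4 * L * L))) as [dl [Hdl P]].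
  { apply Rdiv_lt_0_compat; auto. nra. }
  fold z0 in P.
  exists (dl / L). split. apply Rdiv_lt_0_compat; auto.
  intros s1 s2 t1 t2 Hsub Hs Ht Hl.
  destruct Hsub as [Q1 [Q2 [Q3 Q4]]].
  set (l := (s2 - s1) + (t2 - t1)) in *.
  replace (eta g s1 s2 t1 t2) with (eta (fun z => Cminus (g z) (aff al dg z)) s1 s2 t1 t2).
  2:{ rewrite eta_minus, eta_aff. ring. repeat split; lra. apply adm_g. apply adm_aff. repeat split; lra. }
  assert (Hll : L * l < dl).
  { apply (Rmult_lt_reg_r (/ L)). apply Rinv_0_lt_compat; auto.
    replace (L * l * / L) with l by (field; lra). exact Hl. }
  eapply Rle_trans.
  apply (eta_bound _ (eps / (4 * L * L) * (L * l))).
  apply adm_minus. apply adm_g. apply adm_aff. repeat split; lra.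
  - intros s t Hs' Ht'.
    assert (Hz : Cmod (Cminus (G s t) z0) <= L * l).
    { eapply Rle_trans. apply HLip. split; lra. split; lra.
      apply Rmult_le_compat_l. lra.
      unfold l. apply Rplus_le_compat; apply Rabs_le; lra. }
    replace (Cminus (g (G s t)) (aff al dg (G s t)))
      with (Cminus (Cminus (g (G s t)) (g z0)) (Cmult dg (Cminus (G s t) z0))).
    2:{ unfold aff, al. ring. }
    eapply Rle_trans. apply P. lra.
    apply Rmult_le_compat_l. apply Rlt_le, Rdiv_lt_0_compat; auto. nra. exact Hz.
  - right. unfold l. field. lra.
Qed.

Record rect := mkrect { rs1 : R; rs2 : R; rt1 : R; rt2 : R }.

Definition etaQ Q := eta g (rs1 Q) (rs2 Q) (rt1 Q) (rt2 Q).
Definition subQ Q := sub (rs1 Q) (rs2 Q) (rt1 Q) (rt2 Q).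
Definition ch1 Q := mkrect (rs1 Q) ((rs1 Q + rs2 Q) / 2) (rt1 Q) ((rt1 Q + rt2 Q) / 2).
Definition ch2 Q := mkrect ((rs1 Q + rs2 Q) / 2) (rs2 Q) (rt1 Q) ((rt1 Q + rt2 Q) / 2).
Definition ch3 Q := mkrect (rs1 Q) ((rs1 Q + rs2 Q) / 2) ((rt1 Q + rt2 Q) / 2) (rt2 Q).
Definition ch4 Q := mkrect ((rs1 Q + rs2 Q) / 2) (rs2 Q) ((rt1 Q + rt2 Q) / 2) (rt2 Q).

Definition good Q P := subQ P /\ rs1 Q <= rs1 P /\ rs2 P <= rs2 Q /\ rt1 Q <= rt1 P /\ rt2 P <= rt2 Q /\
  rs2 P - rs1 P = (rs2 Q - rs1 Q) / 2 /\ rt2 P - rt1 P = (rt2 Q - rt1 Q) / 2.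

Lemma ch_good Q : subQ Q -> good Q (ch1 Q) /\ good Q (ch2 Q) /\ good Q (ch3 Q) /\ good Q (ch4 Q).
Proof.
  destruct Q as [s1 s2 t1 t2]. unfold subQ, sub, good, ch1, ch2, ch3, ch4; simpl.
  intros [[? ?] [? [[? ?] ?]]]. repeat split; simpl; lra.
Qed.

Lemma eta_four Q : subQ Q ->
  etaQ Q = Cplus (Cplus (etaQ (ch1 Q)) (etaQ (ch2 Q))) (Cplus (etaQ (ch3 Q)) (etaQ (ch4 Q))).
Proof.
  destruct Q as [s1 s2 t1 t2]. unfold subQ, etaQ, ch1, ch2, ch3, ch4; simpl. intros Hs.
  pose proof Hs as [Q1 [Q2 [Q3 Q4]]].
  rewrite (eta_split_t g s1 s2 t1 ((t1 + t2) / 2) t2); auto. 2: apply adm_g. 2: lra.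
  rewrite (eta_split_s g s1 ((s1 + s2) / 2) s2 t1 ((t1 + t2) / 2)). 2: apply adm_g. 2: repeat split; lra. 2: lra.
  rewrite (eta_split_s g s1 ((s1 + s2) / 2) s2 ((t1 + t2) / 2) t2). 2: apply adm_g. 2: repeat split; lra. 2: lra.
  reflexivity.
Qed.

Definition pick Q :=
  if Rle_dec (Cmod (etaQ Q) / 4) (Cmod (etaQ (ch1 Q))) then ch1 Q else
  if Rle_dec (Cmod (etaQ Q) / 4) (Cmod (etaQ (ch2 Q))) then ch2 Q else
  if Rle_dec (Cmod (etaQ Q) / 4) (Cmod (etaQ (ch3 Q))) then ch3 Q else ch4 Q.

Lemma pick_spec Q : subQ Q -> good Q (pick Q) /\ Cmod (etaQ Q) / 4 <= Cmod (etaQ (pick Q)).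
Proof.
  intros Hs. destruct (ch_good Q Hs) as [G1 [G2 [G3 G4]]].
  pose proof (eta_four Q Hs) as E.
  unfold pick.
  destruct (Rle_dec _ _); [split; auto|].
  destruct (Rle_dec _ _); [split; auto|].
  destruct (Rle_dec _ _); [split; auto|].
  split; auto.
  pose proof (Cmod_triangle (Cplus (etaQ (ch1 Q)) (etaQ (ch2 Q))) (Cplus (etaQ (ch3 Q)) (etaQ (ch4 Q)))).
  pose proof (Cmod_triangle (etaQ (ch1 Q)) (etaQ (ch2 Q))).
  pose proof (Cmod_triangle (etaQ (ch3 Q)) (etaQ (ch4 Q))).
  rewrite <- E in H. lra.
Qed.

Fixpoint sq (n : nat) : rect :=
  match n with O => mkrect a b c d | S n => pick (sq n) end.

Lemma sq_spec n : subQ (sq n) /\ Cmod (etaQ (sq 0)) * (/ 4) ^ n <= Cmod (etaQ (sq n)) /\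
  rs2 (sq n) - rs1 (sq n) = (b - a) * (/ 2) ^ n /\ rt2 (sq n) - rt1 (sq n) = (d - c) * (/ 2) ^ n.
Proof.
  induction n as [|n IH].
  - simpl. unfold subQ, sub; simpl. repeat split; lra.
  - destruct IH as [S1 [S2 [S3 S4]]]. set (X := Cmod (etaQ (sq 0))) in *. simpl sq.
    destruct (pick_spec (sq n) S1) as [[P1 [P2 [P3 [P4 [P5 [P6 P7]]]]]] P8].
    split; auto. split. simpl pow. replace (X * (/ 4 * (/ 4) ^ n)) with (X * (/ 4) ^ n / 4) by field. lra.
    split. rewrite P6, S3. simpl pow. field. rewrite P7, S4. simpl pow. field.
Qed.

Lemma sq_mono n m : (n <= m)%nat -> rs1 (sq n) <= rs1 (sq m) /\ rs2 (sq m) <= rs2 (sq n) /\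
  rt1 (sq n) <= rt1 (sq m) /\ rt2 (sq m) <= rt2 (sq n).
Proof.
  induction 1. lra.
  destruct (sq_spec m) as [S1 _]. simpl sq.
  destruct (pick_spec (sq m) S1) as [[P1 [P2 [P3 [P4 [P5 _]]]]] _]. lra.
Qed.

Lemma sq_cross n m : rs1 (sq n) <= rs2 (sq m) /\ rt1 (sq n) <= rt2 (sq m).
Proof.
  destruct (sq_mono n (Nat.max n m) (Nat.le_max_l _ _)) as [A1 [_ [A3 _]]].
  destruct (sq_mono m (Nat.max n m) (Nat.le_max_r _ _)) as [_ [B2 [_ B4]]].
  destruct (sq_spec (Nat.max n m)) as [[C1 [C2 [C3 C4]]] _]. lra.
Qed.

Theorem goursat : eta g a b c d = RtoC 0.
Proof.
  set (Es := fun x => exists n, x = rs1 (sq n)).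
  set (Et := fun x => exists n, x = rt1 (sq n)).
  destruct (completeness Es) as [s0 [Us Ls]].
  { exists b. intros x [n ->]. destruct (sq_cross n 0) as [X _]. simpl in X. lra. }
  { exists (rs1 (sq 0)). exists 0%nat. auto. }
  destruct (completeness Et) as [t0 [Ut Lt]].
  { exists d. intros x [n ->]. destruct (sq_cross n 0) as [_ X]. simpl in X. lra. }
  { exists (rt1 (sq 0)). exists 0%nat. auto. }
  assert (In_s : forall n, rs1 (sq n) <= s0 <= rs2 (sq n)).
  { intros n. split. apply Us. exists n; auto. apply Ls. intros x [k ->]. apply sq_cross. }
  assert (In_t : forall n, rt1 (sq n) <= t0 <= rt2 (sq n)).
  { intros n. split. apply Ut. exists n; auto. apply Lt. intros x [k ->]. apply sq_cross. }
  destruct (Req_dec (Cmod (eta g a b c d)) 0) as [E0|E0].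
  { apply Cmod_eq_0; auto. }
  exfalso.
  set (e0 := Cmod (eta g a b c d)) in *.
  assert (He0 : 0 < e0) by (pose proof (Cmod_ge_0 (eta g a b c d)); unfold e0 in *; lra).
  set (l0 := (b - a) + (d - c)).
  assert (Hl0 : 0 < l0) by (unfold l0; lra).
  assert (H0 : inR s0 t0).
  { pose proof (In_s 0%nat); pose proof (In_t 0%nat). simpl in *. split; lra. }
  destruct (eta_local s0 t0 H0 (e0 / (2 * l0 ^ 2))) as [del [Hdel P]].
  { apply Rdiv_lt_0_compat; auto. nra. }
  destruct (pow_lt_1_zero (/ 2)) with (y := del / l0) as [N HN].
  { rewrite Rabs_right; lra. }
  { apply Rdiv_lt_0_compat; auto. }
  specialize (HN N (le_n N)). rewrite Rabs_right in HN.
  2:{ apply Rle_ge, pow_le; lra. }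
  destruct (sq_spec N) as [S1 [S2 [S3 S4]]].
  destruct (In_s N), (In_t N).
  assert (Hlt : (rs2 (sq N) - rs1 (sq N)) + (rt2 (sq N) - rt1 (sq N)) < del).
  { rewrite S3, S4. replace ((b - a) * (/ 2) ^ N + (d - c) * (/ 2) ^ N) with (l0 * (/2) ^ N) by (unfold l0; ring).
    apply (Rmult_lt_reg_r (/ l0)). apply Rinv_0_lt_compat; auto.
    replace (l0 * (/ 2) ^ N * / l0) with ((/ 2) ^ N) by (field; lra). exact HN. }
  specialize (P _ _ _ _ S1 ltac:(lra) ltac:(lra) Hlt).
  rewrite S3, S4 in P. fold (etaQ (sq N)) in P.
  replace ((b - a) * (/ 2) ^ N + (d - c) * (/ 2) ^ N) with (l0 * (/2) ^ N) in P by (unfold l0; ring).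
  replace (e0 / (2 * l0 ^ 2) * (l0 * (/ 2) ^ N) ^ 2) with (e0 * (/ 4) ^ N / 2) in P.
  2:{ replace (/ 4) with (/ 2 * / 2) by field. rewrite Rpow_mult_distr. field. lra. }
  change (Cmod (etaQ (sq 0))) with e0 in S2.
  assert (0 < e0 * (/ 4) ^ N). { apply Rmult_lt_0_compat; auto. apply pow_lt; lra. }
  set (Y := e0 * (/ 4) ^ N) in *. lra.
Qed.
End Goursat.

Definition Ec (t : R) : C := (cos t, sin t).
Definition Ed (t : R) : C := (- sin t, cos t).

Lemma Cmod_Ec t : Cmod (Ec t) = 1.
Proof.
  unfold Cmod, Ec; simpl. pose proof (sin2_cos2 t). unfold Rsqr in H.
  replace (cos t * (cos t * 1) + sin t * (sin t * 1)) with 1 by nra. apply sqrt_1.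
Qed.

Lemma Cmod_Ed t : Cmod (Ed t) = 1.
Proof.
  unfold Cmod, Ed; simpl. pose proof (sin2_cos2 t). unfold Rsqr in H.
  replace (- sin t * (- sin t * 1) + cos t * (cos t * 1)) with 1 by nra. apply sqrt_1.
Qed.

Lemma cos_lip x y : Rabs (cos x - cos y) <= Rabs (x - y).
Proof.
  destruct (MVT_gen cos y x (fun u => - sin u)) as [c [_ Hc]].
  - intros u _. auto_derive; auto. ring.
  - intros u _. apply continuity_cos.
  - rewrite Hc, Rabs_mult. pose proof (SIN_bound c). rewrite <- (Rmult_1_l (Rabs (x - y))) at 2.
    apply Rmult_le_compat_r. apply Rabs_pos. rewrite Rabs_Ropp. apply Rabs_le. lra.
Qed.

Lemma sin_lip x y : Rabs (sin x - sin y) <= Rabs (x - y).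
Proof.
  destruct (MVT_gen sin y x cos) as [c [_ Hc]].
  - intros u _. auto_derive; auto. ring.
  - intros u _. apply continuity_sin.
  - rewrite Hc, Rabs_mult. pose proof (COS_bound c). rewrite <- (Rmult_1_l (Rabs (x - y))) at 2.
    apply Rmult_le_compat_r. apply Rabs_pos. apply Rabs_le. lra.
Qed.

Lemma Ec_lip t t' : Cmod (Cminus (Ec t) (Ec t')) <= 2 * Rabs (t - t').
Proof.
  eapply Rle_trans. apply Cmod_le_sum. unfold Ec, Cminus, Cplus, Copp; simpl.
  pose proof (cos_lip t t'); pose proof (sin_lip t t'). unfold Rminus in *. lra.
Qed.

Lemma hasD_Ec t : hasD Ec t (Ed t).
Proof. split; unfold Ec, Ed; simpl; auto_derive; auto; ring. Qed.

Lemma hasD_Ed t : hasD Ed t (Copp (Ec t)).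
Proof. split; unfold Ec, Ed; simpl; auto_derive; auto; ring. Qed.

Lemma Cmod_RtoC_mult (x : R) (z : C) : Cmod (Cmult (RtoC x) z) = Rabs x * Cmod z.
Proof. rewrite Cmod_mult, Cmod_R. auto. Qed.

Section CIF.
Variables (f : C -> C) (w : C) (r r0 : R).
Hypothesis Hf : forall z, Cmod z < 1 -> exists d, is_derive (K:=C_AbsRing) (V:=C_NormedModule) f z d.
Hypothesis Hr : r < 1.
Hypothesis Hw : Cmod w < r.
Hypothesis Hr0 : 0 < r0.
Hypothesis Hr0' : r0 < r - Cmod w.

Definition rho (s : R) := r0 + s * (r - r0).
Definition Gm (s t : R) : C := Cplus (Cmult (RtoC (1 - s)) w) (Cmult (RtoC (rho s)) (Ec t)).
Definition Gms (s t : R) : C := Cplus (Copp w) (Cmult (RtoC (r - r0)) (Ec t)).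
Definition Gmt (s t : R) : C := Cmult (RtoC (rho s)) (Ed t).
Definition gq (z : C) : C := Cmult (f z) (Cinv (Cminus z w)).

Lemma hGs s t : hasD (fun s' => Gm s' t) s (Gms s t).
Proof. split; unfold Gm, Gms, rho, Ec; simpl; auto_derive; auto; ring. Qed.

Lemma hGt s t : hasD (fun t' => Gm s t') t (Gmt s t).
Proof. split; unfold Gm, Gmt, rho, Ec, Ed; simpl; auto_derive; auto; ring. Qed.

Lemma cGs s t : CC (fun s' => Gms s' t) s.
Proof. apply (hasD_CC _ _ (RtoC 0)). split; unfold Gms, Ec; simpl; auto_derive; auto; ring. Qed.

Lemma cGt s t : CC (fun t' => Gmt s t') t.
Proof.
  apply (hasD_CC _ _ (Cmult (RtoC (rho s)) (Copp (Ec t)))).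
  split; unfold Gmt, Ec, Ed; simpl; auto_derive; auto; ring.
Qed.

Lemma w_nonneg : 0 <= Cmod w.
Proof. apply Cmod_ge_0. Qed.

Lemma lGm s t s' t' : inR 0 1 0 (2 * PI) s t -> inR 0 1 0 (2 * PI) s' t' ->
  Cmod (Cminus (Gm s t) (Gm s' t')) <= 4 * (Rabs (s - s') + Rabs (t - t')).
Proof.
  intros [H1 H2] [H3 H4]. pose proof w_nonneg.
  replace (Cminus (Gm s t) (Gm s' t')) with
    (Cplus (Cmult (RtoC (s' - s)) w)
      (Cplus (Cmult (RtoC ((s - s') * (r - r0))) (Ec t)) (Cmult (RtoC (rho s')) (Cminus (Ec t) (Ec t'))))).
  2:{ unfold Gm, rho, RtoC. apply injective_projections; simpl; ring. }
  eapply Rle_trans. apply Cmod_tri3. rewrite !Cmod_RtoC_mult, Cmod_Ec.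
  pose proof (Ec_lip t t').
  assert (Hrho : 0 <= rho s' <= 1) by (unfold rho; nra).
  rewrite (Rabs_right (rho s')) by lra. rewrite Rabs_mult, (Rabs_right (r - r0)) by lra.
  replace (Rabs (s' - s)) with (Rabs (s - s')) by apply Rabs_minus_sym.
  pose proof (Rabs_pos (s - s')). pose proof (Rabs_pos (t - t')).
  assert (Rabs (s - s') * Cmod w <= Rabs (s - s') * 1) by (apply Rmult_le_compat_l; lra).
  assert (Rabs (s - s') * (r - r0) * 1 <= Rabs (s - s') * 1) by nra.
  assert (rho s' * Cmod (Cminus (Ec t) (Ec t')) <= 1 * (2 * Rabs (t - t'))).
  { apply Rmult_le_compat; try lra. apply Cmod_ge_0. }
  lra.
Qed.

Lemma bGs s t : inR 0 1 0 (2 * PI) s t -> Cmod (Gms s t) <= 4.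
Proof.
  intros _. unfold Gms. eapply Rle_trans. apply Cmod_triangle.
  pose proof w_nonneg. rewrite Cmod_opp, Cmod_RtoC_mult, Cmod_Ec, Rabs_right by lra. lra.
Qed.

Lemma bGt s t : inR 0 1 0 (2 * PI) s t -> Cmod (Gmt s t) <= 4.
Proof.
  intros [H1 _]. unfold Gmt. rewrite Cmod_RtoC_mult, Cmod_Ed. pose proof w_nonneg.
  assert (0 <= rho s <= 1) by (unfold rho; nra). rewrite Rabs_right by lra. lra.
Qed.

Lemma Gm_in s t : 0 <= s <= 1 -> Cmod (Gm s t) < 1.
Proof.
  intros Hs. unfold Gm. eapply Rle_lt_trans. apply Cmod_triangle.
  rewrite !Cmod_RtoC_mult, Cmod_Ec. pose proof w_nonneg.
  assert (0 <= rho s) by (unfold rho; nra).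
  rewrite (Rabs_right (1 - s)) by lra. rewrite (Rabs_right (rho s)) by lra. unfold rho. nra.
Qed.

Lemma Gm_ne s t : 0 <= s <= 1 -> Gm s t <> w.
Proof.
  intros Hs E. pose proof w_nonneg.
  assert (E2 : Cplus (Cmult (RtoC (- s)) w) (Cmult (RtoC (rho s)) (Ec t)) = RtoC 0).
  { rewrite <- (Cplus_opp_r w). rewrite <- E at 2. unfold Gm, RtoC. apply injective_projections; simpl; ring. }
  pose proof (Cmod_rev_tri (Cmult (RtoC (rho s)) (Ec t)) (Cmult (RtoC s) w)).
  replace (Cminus (Cmult (RtoC (rho s)) (Ec t)) (Cmult (RtoC s) w)) with (RtoC 0) in H0.
  2:{ rewrite <- E2. unfold RtoC. apply injective_projections; simpl; ring. }
  rewrite Cmod_0, !Cmod_RtoC_mult, Cmod_Ec in H0.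
  assert (0 <= rho s) by (unfold rho; nra).
  rewrite (Rabs_right (rho s)), (Rabs_right s) in H0 by lra. unfold rho in H0. nra.
Qed.

Lemma dGm s t : inR 0 1 0 (2 * PI) s t -> exists dg, Dif gq (Gm s t) dg.
Proof.
  intros [Hs _]. destruct (Hf (Gm s t) (Gm_in s t Hs)) as [df Hdf].
  eexists. unfold gq. apply Dif_mult. apply Dif_of_derive. exact Hdf.
  apply Dif_inv. apply Gm_ne; auto.
Qed.

Lemma goursat_inst : eta Gm Gms Gmt gq 0 1 0 (2 * PI) = RtoC 0.
Proof.
  apply (goursat Gm Gms Gmt gq 0 1 0 (2 * PI) 4).
  lra. pose proof PI_RGT_0. lra. lra.
  exact hGs. exact hGt. exact cGs. exact cGt. exact lGm. exact bGs. exact bGt. exact dGm.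
Qed.


Lemma A1_eq_A0 : CI (fun t => Cmult (gq (Gm 1 t)) (Gmt 1 t)) 0 (2 * PI) =
                 CI (fun t => Cmult (gq (Gm 0 t)) (Gmt 0 t)) 0 (2 * PI).
Proof.
  pose proof goursat_inst as E. unfold eta in E.
  assert (B : CI (fun s => Cmult (gq (Gm s 0)) (Gms s 0)) 0 1 = CI (fun s => Cmult (gq (Gm s (2 * PI))) (Gms s (2 * PI))) 0 1).
  { apply CI_ext. intros x _. unfold Gm, Gms, Ec. rewrite cos_2PI, sin_2PI, cos_0, sin_0. reflexivity. }
  rewrite B in E.
  set (X := CI (fun s => Cmult (gq (Gm s (2 * PI))) (Gms s (2 * PI))) 0 1) in E.
  set (A1 := CI (fun t => Cmult (gq (Gm 1 t)) (Gmt 1 t)) 0 (2 * PI)) in *.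
  set (A0 := CI (fun t => Cmult (gq (Gm 0 t)) (Gmt 0 t)) 0 (2 * PI)) in *.
  replace A1 with (Cplus (Cplus (Cminus X X) (Cminus A1 A0)) A0) by ring.
  rewrite E. ring.
Qed.

Lemma Ec_ne t : Ec t <> RtoC 0.
Proof. intro E. pose proof (Cmod_Ec t). rewrite E, Cmod_0 in H. lra. Qed.

Lemma A1_form : CI (fun t => Cmult (gq (Gm 1 t)) (Gmt 1 t)) 0 (2 * PI) =
  CI (fun t => Cmult (gq (Cmult (RtoC r) (Ec t))) (Cmult (RtoC r) (Ed t))) 0 (2 * PI).
Proof.
  apply CI_ext. intros t _. unfold Gm, Gmt, rho.
  replace (Cplus (Cmult (RtoC (1 - 1)) w) (Cmult (RtoC (r0 + 1 * (r - r0))) (Ec t))) with (Cmult (RtoC r) (Ec t)).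
  replace (r0 + 1 * (r - r0)) with r by ring. reflexivity.
  unfold RtoC; apply injective_projections; simpl; ring.
Qed.

Lemma A0_form : CI (fun t => Cmult (gq (Gm 0 t)) (Gmt 0 t)) 0 (2 * PI) =
  CI (fun t => Cmult Ci (f (Cplus w (Cmult (RtoC r0) (Ec t))))) 0 (2 * PI).
Proof.
  apply CI_ext. intros t _. unfold Gm, Gmt, rho, gq.
  replace (Cplus (Cmult (RtoC (1 - 0)) w) (Cmult (RtoC (r0 + 0 * (r - r0))) (Ec t)))
    with (Cplus w (Cmult (RtoC r0) (Ec t))).
  2:{ unfold RtoC; apply injective_projections; simpl; ring. }
  replace (r0 + 0 * (r - r0)) with r0 by ring.
  replace (Ed t) with (Cmult Ci (Ec t)).
  2:{ unfold Ed, Ec, Ci; apply injective_projections; simpl; ring. }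
  replace (Cminus (Cplus w (Cmult (RtoC r0) (Ec t))) w) with (Cmult (RtoC r0) (Ec t)).
  2:{ unfold RtoC; apply injective_projections; simpl; ring. }
  field. split. apply Ec_ne. intro E. apply RtoC_inj in E || (pose proof (f_equal fst E) as E'; simpl in E'); lra.
Qed.
End CIF.

Lemma Cmod_Ci : Cmod Ci = 1.
Proof. unfold Cmod, Ci; simpl. replace (0 * (0 * 1) + 1 * (1 * 1)) with 1 by ring. apply sqrt_1. Qed.

Lemma CC_Ec t : CC Ec t.
Proof. eapply hasD_CC. apply hasD_Ec. Qed.

Lemma CIF (f : C -> C) (w : C) (r : R) :
  (forall z, Cmod z < 1 -> exists d, is_derive (K:=C_AbsRing) (V:=C_NormedModule) f z d) ->
  r < 1 -> Cmod w < r ->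
  CI (fun t => Cmult (gq f w (Cmult (RtoC r) (Ec t))) (Cmult (RtoC r) (Ed t))) 0 (2 * PI)
   = Cmult (RtoC (2 * PI)) (Cmult Ci (f w)).
Proof.
  intros Hf Hr Hw.
  set (LHS := CI _ 0 (2 * PI)).
  set (RHS := Cmult (RtoC (2 * PI)) (Cmult Ci (f w))).
  pose proof (Cmod_ge_0 w) as Hw0.
  assert (Key : forall eps, 0 < eps -> Cmod (Cminus LHS RHS) <= 4 * PI * eps).
  { intros eps Heps.
    destruct (Hf w ltac:(lra)) as [df Hdf].
    destruct (Dif_Ccont _ _ _ (Dif_of_derive _ _ _ Hdf) eps Heps) as [del [Hdel Pd]].
    set (r0 := Rmin (del / 2) ((r - Cmod w) / 2)).
    assert (R1 : 0 < r0) by (apply Rmin_pos; lra).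
    assert (R2 : r0 < r - Cmod w) by (pose proof (Rmin_r (del / 2) ((r - Cmod w) / 2)); unfold r0 in *; lra).
    assert (R3 : r0 < del) by (pose proof (Rmin_l (del / 2) ((r - Cmod w) / 2)); unfold r0 in *; lra).
    unfold LHS. rewrite <- (A1_form f w r r0).
    rewrite (A1_eq_A0 f w r r0 Hf Hr Hw R1 R2).
    rewrite (A0_form f w r r0 R1).
    unfold RHS. replace (Cmult (RtoC (2 * PI)) (Cmult Ci (f w))) with (CI (fun _ => Cmult Ci (f w)) 0 (2 * PI))
      by (rewrite CI_const; do 2 f_equal; ring).
    assert (Hu : forall t, Cmod (Cminus (Cplus w (Cmult (RtoC r0) (Ec t))) w) = r0).
    { intros t. replace (Cminus (Cplus w (Cmult (RtoC r0) (Ec t))) w) with (Cmult (RtoC r0) (Ec t))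
        by (unfold RtoC; apply injective_projections; simpl; ring).
      rewrite Cmod_RtoC_mult, Cmod_Ec, Rabs_right by lra. ring. }
    assert (Hin : forall t, Cmod (Cplus w (Cmult (RtoC r0) (Ec t))) < 1).
    { intros t. eapply Rle_lt_trans. apply Cmod_triangle. rewrite Cmod_RtoC_mult, Cmod_Ec, Rabs_right by lra. lra. }
    assert (Ex1 : CIex (fun t => Cmult Ci (f (Cplus w (Cmult (RtoC r0) (Ec t))))) 0 (2 * PI)).
    { apply CIex_CC. pose proof PI_RGT_0; lra. intros t _.
      apply CC_mult. apply CC_const.
      destruct (Hf _ (Hin t)) as [d1 Hd1].
      apply (CC_comp f (fun t => Cplus w (Cmult (RtoC r0) (Ec t)))).
      eapply Dif_Ccont. apply Dif_of_derive. exact Hd1.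
      apply CC_plus. apply CC_const. apply CC_mult. apply CC_const. apply CC_Ec. }
    assert (Ex2 : CIex (fun _ => Cmult Ci (f w)) 0 (2 * PI)).
    { apply CIex_CC. pose proof PI_RGT_0; lra. intros; apply CC_const. }
    rewrite <- CI_minus by auto.
    replace (4 * PI * eps) with (2 * (2 * PI - 0) * eps) by ring.
    apply CI_bound. pose proof PI_RGT_0; lra. apply CIex_minus; auto.
    intros t _.
    replace (Cminus (Cmult Ci (f (Cplus w (Cmult (RtoC r0) (Ec t))))) (Cmult Ci (f w)))
      with (Cmult Ci (Cminus (f (Cplus w (Cmult (RtoC r0) (Ec t)))) (f w))) by ring.
    rewrite Cmod_mult, Cmod_Ci, Rmult_1_l. apply Rlt_le, Pd. rewrite Hu. lra. }
  assert (Z : Cmod (Cminus LHS RHS) = 0).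
  { apply Rle_antisym; [|apply Cmod_ge_0].
    apply Rnot_lt_le. intro Hlt.
    pose proof (Key (Cmod (Cminus LHS RHS) / (8 * PI))) as K.
    pose proof PI_RGT_0.
    assert (0 < Cmod (Cminus LHS RHS) / (8 * PI)) by (apply Rdiv_lt_0_compat; lra).
    specialize (K H0).
    replace (4 * PI * (Cmod (Cminus LHS RHS) / (8 * PI))) with (Cmod (Cminus LHS RHS) / 2) in K by (field; lra).
    lra. }
  apply Cmod_eq_0 in Z.
  replace LHS with (Cplus (Cminus LHS RHS) RHS) by ring. rewrite Z. ring.
Qed.

Fixpoint csum (F : nat -> C) (N : nat) : C :=
  match N with O => RtoC 0 | S n => Cplus (csum F n) (F n) end.

Lemma CIex_csum (F : nat -> R -> C) N a b : (forall n, CIex (F n) a b) ->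
  CIex (fun t => csum (fun n => F n t) N) a b.
Proof.
  intros H. induction N as [|N IH]; simpl.
  - split; simpl; apply (ex_RInt_const (V:=R_CompleteNormedModule)).
  - apply CIex_plus; auto.
Qed.

Lemma CI_csum (F : nat -> R -> C) N a b : (forall n, CIex (F n) a b) ->
  CI (fun t => csum (fun n => F n t) N) a b = csum (fun n => CI (F n) a b) N.
Proof.
  intros H. induction N as [|N IH]; simpl.
  - rewrite CI_const. unfold RtoC; apply injective_projections; simpl; ring.
  - rewrite CI_plus; auto. rewrite IH; auto. apply CIex_csum; auto.
Qed.

Lemma CC_pow h x n : CC h x -> CC (fun y => Cpow (h y) n) x.
Proof.
  intros H. induction n as [|n IH]; simpl. apply CC_const. apply CC_mult; auto.
Qed.

Lemma CC_Cmod h x : CC h x -> continuity_pt (fun y => Cmod (h y)) x.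
Proof.
  intros H eps Heps. destruct (H eps Heps) as [d [Hd P]]. exists d; split; auto.
  intros y [_ Hy]. simpl in *. unfold R_dist in *. specialize (P y Hy).
  apply Rabs_lt_between'. pose proof (Cmod_rev_tri (h y) (h x)).
  pose proof (Cmod_rev_tri (h x) (h y)). rewrite Cmod_minus_sym in H1. lra.
Qed.

Section Taylor.
Variables (f : C -> C) (r : R).
Hypothesis Hf : forall z, Cmod z < 1 -> exists d, is_derive (K:=C_AbsRing) (V:=C_NormedModule) f z d.
Hypothesis Hr : 0 < r.
Hypothesis Hr1 : r < 1.

Definition gam (t : R) : C := Cmult (RtoC r) (Ec t).
Definition gami (t : R) : C := Cmult (RtoC (/ r)) (cos t, - sin t).

Lemma Cmod_gam t : Cmod (gam t) = r.
Proof. unfold gam. rewrite Cmod_RtoC_mult, Cmod_Ec, Rabs_right by lra. ring. Qed.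

Lemma gam_ne t : gam t <> RtoC 0.
Proof. intro E. pose proof (Cmod_gam t). rewrite E, Cmod_0 in H. lra. Qed.

Lemma gami_eq t : Cinv (gam t) = gami t.
Proof.
  assert (E : Cmult (gam t) (gami t) = RtoC 1).
  { unfold gam, gami, Ec, RtoC. pose proof (sin2_cos2 t) as H. unfold Rsqr in H.
    assert (Hu : r * / r = 1) by (field; lra).
    apply injective_projections; simpl; [|ring].
    transitivity ((r * / r) * (sin t * sin t + cos t * cos t)). ring. rewrite Hu, H. ring. }
  replace (Cinv (gam t)) with (Cmult (Cinv (gam t)) (Cmult (gam t) (gami t))).
  field. apply gam_ne. rewrite E. field. apply gam_ne.
Qed.

Lemma CC_gam t : CC gam t.
Proof. apply (hasD_CC _ _ (Cmult (RtoC r) (Ed t))). unfold gam. eapply hasD_eqd.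
  apply hasD_mult. apply hasD_const. apply hasD_Ec. unfold RtoC; apply injective_projections; simpl; ring. Qed.

Lemma CC_gami t : CC (fun t => Cinv (gam t)) t.
Proof.
  intros eps Heps. destruct (hasD_CC gami t (Cmult (RtoC (/ r)) (- sin t, - cos t))) with (eps := eps) as [d [Hd P]]; auto.
  { split; unfold gami; simpl; auto_derive; auto; ring. }
  exists d; split; auto. intros y Hy. rewrite !gami_eq. auto.
Qed.

Lemma CC_fgam t : CC (fun t => f (gam t)) t.
Proof.
  destruct (Hf (gam t)) as [d Hd]. rewrite Cmod_gam; auto.
  apply (CC_comp f gam). eapply Dif_Ccont. apply Dif_of_derive. exact Hd. apply CC_gam.
Qed.

Definition cf (n : nat) (t : R) : C := Cmult Ci (Cmult (f (gam t)) (Cpow (Cinv (gam t)) n)).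

Lemma CIex_cf n : CIex (cf n) 0 (2 * PI).
Proof.
  apply CIex_CC. pose proof PI_RGT_0; lra. intros t _. unfold cf.
  apply CC_mult. apply CC_const. apply CC_mult. apply CC_fgam. apply CC_pow. apply CC_gami.
Qed.

Section W.
Variable (w : C).
Hypothesis Hw : Cmod w <= r / 2.

Definition remi (N : nat) (t : R) : C :=
  Cmult Ci (Cmult (f (gam t)) (Cmult (Cpow (Cmult w (Cinv (gam t))) N)
     (Cmult (gam t) (Cinv (Cminus (gam t) w))))).

Lemma gam_w t : Cminus (gam t) w <> RtoC 0.
Proof.
  intro E. pose proof (Cmod_rev_tri (gam t) w). rewrite E, Cmod_0, Cmod_gam in H. lra.
Qed.

Lemma Cmod_gam_w t : r / 2 <= Cmod (Cminus (gam t) w).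
Proof. pose proof (Cmod_rev_tri (gam t) w). rewrite Cmod_gam in H. lra. Qed.

Lemma expand N t : Cmult (gq f w (gam t)) (Cmult (RtoC r) (Ed t)) =
  Cplus (csum (fun n => Cmult (Cpow w n) (cf n t)) N) (remi N t).
Proof.
  pose proof (gam_ne t) as H1. pose proof (gam_w t) as H2.
  induction N as [|N IH].
  - simpl. unfold remi, gq. simpl.
    replace (Cmult (RtoC r) (Ed t)) with (Cmult Ci (gam t)).
    2:{ unfold gam, Ed, Ec, Ci, RtoC; apply injective_projections; simpl; ring. }
    field. auto.
  - rewrite IH. simpl. unfold remi, cf. rewrite !Cpow_mult_l. simpl. set (P := Cpow w N). set (Q := Cpow (Cinv (gam t)) N). field. auto.
Qed.

Lemma CIex_remi N : CIex (remi N) 0 (2 * PI).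
Proof.
  apply CIex_CC. pose proof PI_RGT_0; lra. intros t _. unfold remi.
  apply CC_mult. apply CC_const. apply CC_mult. apply CC_fgam. apply CC_mult.
  apply CC_pow. apply CC_mult. apply CC_const. apply CC_gami.
  apply CC_mult. apply CC_gam.
  apply (CC_comp (fun z => Cinv (Cminus z w)) gam).
  eapply Dif_Ccont. apply Dif_inv. intro E. apply (gam_w t). rewrite E.
  unfold RtoC; apply injective_projections; simpl; ring.
  apply CC_gam.
Qed.

Lemma bound_remi N M t : (forall t, 0 <= t <= 2 * PI -> Cmod (f (gam t)) <= M) -> 0 <= t <= 2 * PI ->
  Cmod (remi N t) <= M * (Cmod w / r) ^ N * 2.
Proof.
  intros HM Ht. unfold remi. rewrite !Cmod_mult, Cmod_Ci, Cmod_pow, Cmod_mult, Cmod_inv, Cmod_gam.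
  2: apply gam_ne.
  rewrite Cmod_inv by apply gam_w.
  pose proof (Cmod_gam_w t). pose proof (Cmod_ge_0 w). pose proof (HM t Ht).
  pose proof (Cmod_ge_0 (f (gam t))).
  assert (0 <= M) by lra.
  assert (A1 : r * / Cmod (Cminus (gam t) w) <= 2).
  { apply (Rmult_le_reg_r (Cmod (Cminus (gam t) w))). lra.
    rewrite Rmult_assoc, Rinv_l by lra. lra. }
  assert (A2 : 0 <= (Cmod w * / r) ^ N). { apply pow_le. apply Rmult_le_pos; auto. apply Rlt_le, Rinv_0_lt_compat; auto. }
  rewrite Rmult_1_l. unfold Rdiv.
  assert (A3 : 0 <= r * / Cmod (Cminus (gam t) w)). { apply Rmult_le_pos. lra. apply Rlt_le, Rinv_0_lt_compat; lra. }
  rewrite Rmult_assoc. apply Rmult_le_compat; auto.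
  apply Rmult_le_pos; auto. apply Rmult_le_compat_l; auto.
Qed.

End W.
End Taylor.

Lemma csum_mult_r (F : nat -> C) (c : C) N :
  csum (fun n => Cmult (F n) c) N = Cmult (csum F N) c.
Proof. induction N as [|N IH]; simpl. ring. rewrite IH. ring. Qed.

Lemma csum_ext (F1 F2 : nat -> C) N : (forall n, F1 n = F2 n) -> csum F1 N = csum F2 N.
Proof. intros H. induction N; simpl; auto. rewrite IHN, H; auto. Qed.

Lemma taylor (f : C -> C) :
  (forall z, Cmod z < 1 -> exists d, is_derive (K:=C_AbsRing) (V:=C_NormedModule) f z d) ->
  forall N, exists (A : nat -> C) (K : R), forall w, Cmod w <= / 4 ->
    Cmod (Cminus (f w) (csum (fun n => Cmult (A n) (Cpow w n)) N)) <= K * Cmod w ^ N.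
Proof.
  intros Hf N.
  set (r := / 2).
  assert (Hr : 0 < r) by (unfold r; lra). assert (Hr1 : r < 1) by (unfold r; lra).
  pose proof PI_RGT_0 as HPI.
  destruct (continuity_ab_maj (fun t => Cmod (f (gam r t))) 0 (2 * PI)) as [Mx [HMx _]].
  lra. intros t _. apply CC_Cmod. apply CC_fgam; auto.
  set (M := Cmod (f (gam r Mx))) in *.
  assert (HM0 : 0 <= M) by apply Cmod_ge_0.
  set (D := Cmult (RtoC (2 * PI)) Ci).
  assert (HD : D <> RtoC 0).
  { intro E. pose proof (f_equal snd E) as E'. unfold D, Ci, RtoC in E'; simpl in E'. lra. }
  exists (fun n => Cmult (CI (cf f r n) 0 (2 * PI)) (Cinv D)).
  exists (4 * M * 2 ^ N).
  intros w Hw.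
  assert (Hw2 : Cmod w <= r / 2) by (unfold r; lra).
  pose proof (CIF f w r Hf Hr1 ltac:(pose proof (Cmod_ge_0 w); lra)) as E.
  rewrite (CI_ext _ (fun t => Cplus (csum (fun n => Cmult (Cpow w n) (cf f r n t)) N) (remi f r w N t))) in E.
  2:{ intros t _. apply (expand f r Hr w Hw2 N t). }
  rewrite CI_plus in E.
  2:{ apply (CIex_csum (fun n t => Cmult (Cpow w n) (cf f r n t))). intros n. apply CIex_scal. apply CIex_cf; auto. }
  2:{ apply CIex_remi; auto. }
  rewrite (CI_csum (fun n t => Cmult (Cpow w n) (cf f r n t))) in E.
  2:{ intros n. apply CIex_scal. apply CIex_cf; auto. }
  rewrite (csum_ext _ (fun n => Cmult (Cmult (Cpow w n) (CI (cf f r n) 0 (2 * PI))) (RtoC 1))) in E.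
  2:{ intros n. rewrite CI_scal. ring. apply CIex_cf; auto. }
  rewrite csum_mult_r in E.
  set (S := csum (fun n => Cmult (Cpow w n) (CI (cf f r n) 0 (2 * PI))) N) in *.
  set (Rm := CI (remi f r w N) 0 (2 * PI)) in *.
  rewrite (csum_ext _ (fun n => Cmult (Cmult (Cpow w n) (CI (cf f r n) 0 (2 * PI))) (Cinv D))).
  2:{ intros n. ring. }
  rewrite csum_mult_r. fold S.
  assert (Ef : f w = Cmult (Cplus S Rm) (Cinv D)).
  { replace (Cmult (RtoC (2 * PI)) (Cmult Ci (f w))) with (Cmult D (f w)) in E by (unfold D; ring).
    replace (f w) with (Cmult (Cmult D (f w)) (Cinv D)) by (field; auto).
    rewrite <- E. f_equal. ring. }
  rewrite Ef.
  replace (Cminus (Cmult (Cplus S Rm) (Cinv D)) (Cmult S (Cinv D))) with (Cmult Rm (Cinv D)) by ring.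
  rewrite Cmod_mult, Cmod_inv by auto.
  assert (CD : Cmod D = 2 * PI).
  { unfold D. rewrite Cmod_mult. unfold Cmod at 2, Ci; simpl.
    replace (0 * (0 * 1) + 1 * (1 * 1)) with 1 by ring. rewrite sqrt_1, Cmod_R, Rabs_right by lra. ring. }
  rewrite CD.
  assert (BR : Cmod Rm <= 2 * (2 * PI - 0) * (M * (Cmod w / r) ^ N * 2)).
  { apply CI_bound. lra. apply CIex_remi; auto. intros t Ht. apply bound_remi; auto. }
  replace ((Cmod w / r) ^ N) with (2 ^ N * Cmod w ^ N) in BR.
  2:{ unfold r. rewrite <- Rpow_mult_distr. f_equal. field. }
  apply (Rmult_le_reg_r (2 * PI)). lra.
  rewrite Rmult_assoc, Rinv_l, Rmult_1_r by lra.
  eapply Rle_trans. exact BR. right. ring.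
Qed.

Lemma pow_le_mono x n m : 0 <= x <= 1 -> (n <= m)%nat -> x ^ m <= x ^ n.
Proof.
  intros Hx Hnm. induction Hnm. lra.
  simpl. apply Rle_trans with (1 * x ^ m). apply Rmult_le_compat_r. apply pow_le; lra. lra. lra.
Qed.

Lemma small_zero a C0 x0 : 0 <= a -> 0 < x0 -> (forall x, 0 < x <= x0 -> a <= C0 * x) -> a = 0.
Proof.
  intros Ha Hx0 H. destruct (Req_dec a 0) as [E|E]; auto. exfalso.
  assert (Ha' : 0 < a) by (destruct Ha as [Ha|Ha]; [exact Ha | exfalso; apply E; auto]).
  set (x := Rmin x0 (a / (2 * (Rabs C0 + 1)))).
  pose proof (Rabs_pos C0).
  assert (Hx : 0 < x) by (apply Rmin_pos; auto; apply Rdiv_lt_0_compat; lra).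
  assert (Hx1 : x <= a / (2 * (Rabs C0 + 1))) by apply Rmin_r.
  specialize (H x (conj Hx (Rmin_l _ _))).
  assert (C0 * x <= Rabs C0 * x) by (apply Rmult_le_compat_r; [lra | apply Rle_abs]).
  assert (Rabs C0 * x <= (Rabs C0 + 1) * (a / (2 * (Rabs C0 + 1)))) by (apply Rmult_le_compat; lra).
  replace ((Rabs C0 + 1) * (a / (2 * (Rabs C0 + 1)))) with (a / 2) in H2 by (field; lra).
  lra.
Qed.

Lemma Cmod_RtoC_pow x j : 0 <= x -> Cmod (Cpow (RtoC x) j) = x ^ j.
Proof. intros Hx. rewrite Cmod_pow, Cmod_R, Rabs_right by lra. auto. Qed.

Section Final.
Variables (m f : C -> C) (beta : C) (k : nat) (A : nat -> C) (K : R).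
Hypothesis Hmd : exists dm, Dif m (RtoC 0) dm.
Hypothesis Hb : Cmod beta = 1.
Hypothesis HE : forall z, Cmod z < 1 ->
  Cminus (Cmult (Cmult (Cpow beta k) (m (RtoC 0))) (f z)) (Cmult (m z) (f (Cmult beta z))) = Cpow z k.
Hypothesis HT : forall w, Cmod w <= / 4 ->
  Cmod (Cminus (f w) (csum (fun n => Cmult (A n) (Cpow w n)) (S k))) <= K * Cmod w ^ (S k).

Lemma csum_tail j : (forall i, (i < j)%nat -> A i = RtoC 0) -> forall N, exists B, 0 <= B /\
  forall w, Cmod w <= 1 ->
  Cmod (Cminus (csum (fun i => Cmult (A i) (Cpow w i)) N)
                (if Nat.ltb j N then Cmult (A j) (Cpow w j) else RtoC 0)) <= B * Cmod w ^ (S j).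
Proof.
  intros Hz N. induction N as [|N [B [HB IH]]].
  - exists 0. split. lra. intros w _. simpl.
    replace (Cminus (RtoC 0) (RtoC 0)) with (RtoC 0) by ring. rewrite Cmod_0. lra.
  - destruct (Compare_dec.lt_eq_lt_dec N j) as [[H|H]|H].
    + exists B. split; auto. intros w Hw.
      assert (E1 : Nat.ltb j (S N) = false) by (apply Nat.ltb_ge; lia).
      assert (E2 : Nat.ltb j N = false) by (apply Nat.ltb_ge; lia).
      rewrite E1. specialize (IH w Hw). rewrite E2 in IH. simpl. rewrite (Hz N H).
      replace (Cminus (Cplus (csum (fun i => Cmult (A i) (Cpow w i)) N) (Cmult (RtoC 0) (Cpow w N))) (RtoC 0))
        with (Cminus (csum (fun i => Cmult (A i) (Cpow w i)) N) (RtoC 0)) by ring. auto.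
    + subst N. exists B. split; auto. intros w Hw.
      assert (E1 : Nat.ltb j (S j) = true) by (apply Nat.ltb_lt; lia).
      assert (E2 : Nat.ltb j j = false) by (apply Nat.ltb_ge; lia).
      rewrite E1. specialize (IH w Hw). rewrite E2 in IH. simpl.
      replace (Cminus (Cplus (csum (fun i => Cmult (A i) (Cpow w i)) j) (Cmult (A j) (Cpow w j))) (Cmult (A j) (Cpow w j)))
        with (Cminus (csum (fun i => Cmult (A i) (Cpow w i)) j) (RtoC 0)) by ring. auto.
    + exists (B + Cmod (A N)). split. pose proof (Cmod_ge_0 (A N)); lra. intros w Hw.
      assert (E1 : Nat.ltb j (S N) = true) by (apply Nat.ltb_lt; lia).
      assert (E2 : Nat.ltb j N = true) by (apply Nat.ltb_lt; lia).
      rewrite E1. specialize (IH w Hw). rewrite E2 in IH. simpl.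
      replace (Cminus (Cplus (csum (fun i => Cmult (A i) (Cpow w i)) N) (Cmult (A N) (Cpow w N))) (Cmult (A j) (Cpow w j)))
        with (Cplus (Cminus (csum (fun i => Cmult (A i) (Cpow w i)) N) (Cmult (A j) (Cpow w j))) (Cmult (A N) (Cpow w N))) by ring.
      eapply Rle_trans. apply Cmod_triangle. rewrite Cmod_mult, Cmod_pow.
      pose proof (Cmod_ge_0 w). pose proof (Cmod_ge_0 (A N)).
      assert (Cmod w ^ N <= Cmod w ^ S j) by (apply pow_le_mono; [lra | lia]).
      assert (Cmod (A N) * Cmod w ^ N <= Cmod (A N) * Cmod w ^ S j) by (apply Rmult_le_compat_l; auto).
      change (Cmod w * Cmod w ^ j) with (Cmod w ^ S j). nra.
Qed.

Lemma tail j : (forall i, (i < j)%nat -> A i = RtoC 0) -> (j <= k)%nat ->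
  exists B, 0 <= B /\ forall w, Cmod w <= / 4 ->
  Cmod (Cminus (f w) (Cmult (A j) (Cpow w j))) <= B * Cmod w ^ (S j).
Proof.
  intros Hz Hj. destruct (csum_tail j Hz (S k)) as [B [HB P]].
  exists (B + Rabs K). split. pose proof (Rabs_pos K); lra.
  intros w Hw. pose proof (Cmod_ge_0 w).
  specialize (P w ltac:(lra)). assert (E1 : Nat.ltb j (S k) = true) by (apply Nat.ltb_lt; lia).
  rewrite E1 in P. specialize (HT w Hw).
  replace (Cminus (f w) (Cmult (A j) (Cpow w j))) with
    (Cplus (Cminus (f w) (csum (fun n => Cmult (A n) (Cpow w n)) (S k)))
           (Cminus (csum (fun i => Cmult (A i) (Cpow w i)) (S k)) (Cmult (A j) (Cpow w j)))) by ring.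
  eapply Rle_trans. apply Cmod_triangle.
  assert (Cmod w ^ S k <= Cmod w ^ S j) by (apply pow_le_mono; [lra | lia]).
  assert (0 <= Cmod w ^ S k) by (apply pow_le; lra).
  assert (K * Cmod w ^ S k <= Rabs K * Cmod w ^ S j).
  { apply Rle_trans with (Rabs K * Cmod w ^ S k). apply Rmult_le_compat_r; auto. apply Rle_abs.
    apply Rmult_le_compat_l; auto. apply Rabs_pos. }
  lra.
Qed.

Lemma main_bound j : (forall i, (i < j)%nat -> A i = RtoC 0) -> (j <= k)%nat ->
  exists C0 x0, 0 < x0 /\ forall x, 0 < x <= x0 ->
  Cmod (Cminus (Cmult (Cmult (m (RtoC 0)) (A j)) (Cmult (Cminus (Cpow beta k) (Cpow beta j)) (Cpow (RtoC x) j)))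
               (Cpow (RtoC x) k)) <= C0 * x ^ (S j).
Proof.
  intros Hz Hj. destruct (tail j Hz Hj) as [B [HB P]].
  destruct Hmd as [dm Hdm].
  destruct (Hdm 1 Rlt_0_1) as [del [Hdel Pm]].
  set (c0 := m (RtoC 0)).
  set (Bm := Cmod dm + 1).
  assert (HBm : 0 <= Bm) by (unfold Bm; pose proof (Cmod_ge_0 dm); lra).
  assert (Mb : forall z, Cmod z < del -> Cmod (Cminus (m z) c0) <= Bm * Cmod z).
  { intros z Hz'. specialize (Pm z). replace (Cminus z (RtoC 0)) with z in Pm by ring. specialize (Pm Hz').
    pose proof (Cmod_triangle (Cminus (Cminus (m z) c0) (Cmult dm z)) (Cmult dm z)).
    replace (Cplus (Cminus (Cminus (m z) c0) (Cmult dm z)) (Cmult dm z)) with (Cminus (m z) c0) in H by ring.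
    rewrite Cmod_mult in H. unfold Bm. fold c0 in Pm. lra. }
  exists (Cmod c0 * B + (Cmod c0 + Bm) * B + Bm * Cmod (A j)).
  exists (Rmin (/ 4) (del / 2)). split. apply Rmin_pos; lra.
  intros x [Hx0 Hx1]. pose proof (Rmin_l (/ 4) (del / 2)). pose proof (Rmin_r (/ 4) (del / 2)).
  set (w := RtoC x).
  assert (Hw : Cmod w = x) by (unfold w; rewrite Cmod_R, Rabs_right; lra).
  assert (Hbw : Cmod (Cmult beta w) = x) by (rewrite Cmod_mult, Hb, Hw; ring).
  pose proof (HE w ltac:(lra)) as E.
  assert (Pw := P w ltac:(lra)). assert (Pbw := P (Cmult beta w) ltac:(lra)).
  rewrite Hw in Pw. rewrite Hbw in Pbw.
  assert (Mw := Mb w ltac:(lra)). rewrite Hw in Mw.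
  set (Sw := Cminus (f w) (Cmult (A j) (Cpow w j))) in *.
  set (Sbw := Cminus (f (Cmult beta w)) (Cmult (A j) (Cpow (Cmult beta w) j))) in *.
  replace (Cminus (Cmult (Cmult c0 (A j)) (Cmult (Cminus (Cpow beta k) (Cpow beta j)) (Cpow w j))) (Cpow w k))
    with (Cplus (Copp (Cmult (Cmult (Cpow beta k) c0) Sw))
           (Cplus (Cmult (m w) Sbw) (Cmult (Cminus (m w) c0) (Cmult (A j) (Cmult (Cpow beta j) (Cpow w j)))))).
  2:{ rewrite <- E. unfold Sw, Sbw. rewrite Cpow_mult_l. fold c0. ring. }
  eapply Rle_trans. apply Cmod_tri3.
  rewrite Cmod_opp, !Cmod_mult, !Cmod_pow, Hb, Hw, pow1.
  assert (Hmw : Cmod (m w) <= Cmod c0 + Bm).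
  { pose proof (Cmod_rev_tri (m w) c0). assert (Bm * x <= Bm * 1) by (apply Rmult_le_compat_l; lra). lra. }
  pose proof (Cmod_ge_0 c0). pose proof (Cmod_ge_0 (A j)). pose proof (Cmod_ge_0 (m w)).
  pose proof (Cmod_ge_0 Sw). pose proof (Cmod_ge_0 Sbw). pose proof (Cmod_ge_0 (Cminus (m w) c0)).
  assert (Hxj : 0 <= x ^ j) by (apply pow_le; lra).
  assert (T1 : 1 * Cmod c0 * Cmod Sw <= Cmod c0 * B * x ^ S j).
  { rewrite Rmult_1_l, Rmult_assoc. apply Rmult_le_compat_l; auto. }
  assert (T2 : Cmod (m w) * Cmod Sbw <= (Cmod c0 + Bm) * B * x ^ S j).
  { rewrite Rmult_assoc. apply Rmult_le_compat; auto. }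
  assert (T3 : Cmod (Cminus (m w) c0) * (Cmod (A j) * (1 * x ^ j)) <= Bm * Cmod (A j) * x ^ S j).
  { rewrite Rmult_1_l. simpl pow. replace (Bm * Cmod (A j) * (x * x ^ j)) with ((Bm * x) * (Cmod (A j) * x ^ j)) by ring.
    apply Rmult_le_compat_r; auto. apply Rmult_le_pos; auto. }
  rewrite pow1. replace ((Cmod c0 * B + (Cmod c0 + Bm) * B + Bm * Cmod (A j)) * x ^ S j) with (Cmod c0 * B * x ^ S j + (Cmod c0 + Bm) * B * x ^ S j + Bm * Cmod (A j) * x ^ S j) by ring. lra.
Qed.

Lemma zeros (Hk1 : (1 <= k)%nat) (Hm0 : m (RtoC 0) <> RtoC 0) (Hbne : forall j, (j < k)%nat -> Cpow beta k <> Cpow beta j) :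
  forall j, (j <= k)%nat -> forall i, (i < j)%nat -> A i = RtoC 0.
Proof.
  induction j as [|j IH].
  - intros _ i Hi. lia.
  - intros Hj i Hi.
    assert (Hz : forall i, (i < j)%nat -> A i = RtoC 0) by (apply IH; lia).
    destruct (Nat.eq_dec i j) as [->|Hne]; [|apply Hz; lia].
    destruct (main_bound j Hz ltac:(lia)) as [C0 [x0 [Hx0 P]]].
    set (a := Cmod (m (RtoC 0)) * Cmod (A j) * Cmod (Cminus (Cpow beta k) (Cpow beta j))).
    assert (Ha : 0 <= a) by (unfold a; repeat apply Rmult_le_pos; apply Cmod_ge_0).
    assert (a = 0).
    { apply (small_zero a (C0 + 1) (Rmin x0 1)); auto. apply Rmin_pos; lra.
      intros x [H1 H2]. pose proof (Rmin_l x0 1). pose proof (Rmin_r x0 1).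
      specialize (P x ltac:(lra)).
      pose proof (Cmod_rev_tri (Cmult (Cmult (m (RtoC 0)) (A j)) (Cmult (Cminus (Cpow beta k) (Cpow beta j)) (Cpow (RtoC x) j))) (Cpow (RtoC x) k)).
      rewrite !Cmod_mult, !Cmod_RtoC_pow in H3 by lra.
      assert (x ^ k <= x ^ S j) by (apply pow_le_mono; [lra | lia]).
      assert (Hxj : 0 < x ^ j) by (apply pow_lt; lra).
      assert (a * x ^ j <= (C0 + 1) * x * x ^ j).
      { unfold a. replace ((C0 + 1) * x * x ^ j) with (C0 * x ^ S j + x ^ S j) by (simpl; ring). lra. }
      apply (Rmult_le_reg_r (x ^ j)); auto. }
    unfold a in H. apply Rmult_integral in H. destruct H as [H|H].
    apply Rmult_integral in H. destruct H as [H|H].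
    + exfalso. apply Hm0. apply Cmod_eq_0; auto.
    + apply Cmod_eq_0; auto.
    + exfalso. apply (Hbne j ltac:(lia)). apply Cmod_eq_0 in H.
      replace (Cpow beta k) with (Cplus (Cminus (Cpow beta k) (Cpow beta j)) (Cpow beta j)) by ring.
      rewrite H. ring.
Qed.

Lemma final_contra (Hk1 : (1 <= k)%nat) (Hm0 : m (RtoC 0) <> RtoC 0) (Hbne : forall j, (j < k)%nat -> Cpow beta k <> Cpow beta j) : False.
Proof.
  pose proof (zeros Hk1 Hm0 Hbne k (le_n k)) as Hz.
  destruct (main_bound k Hz (le_n k)) as [C0 [x0 [Hx0 P]]].
  assert (H1 : 1 = 0).
  { apply (small_zero 1 C0 (Rmin x0 1)). lra. apply Rmin_pos; lra.
    intros x [H1 H2]. pose proof (Rmin_l x0 1). pose proof (Rmin_r x0 1).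
    specialize (P x ltac:(lra)).
    replace (Cminus (Cmult (Cmult (m (RtoC 0)) (A k)) (Cmult (Cminus (Cpow beta k) (Cpow beta k)) (Cpow (RtoC x) k))) (Cpow (RtoC x) k))
      with (Copp (Cpow (RtoC x) k)) in P by ring.
    rewrite Cmod_opp, Cmod_RtoC_pow in P by lra.
    assert (Hxk : 0 < x ^ k) by (apply pow_lt; lra).
    apply (Rmult_le_reg_r (x ^ k)); auto. simpl in P. lra. }
  lra.
Qed.

End Final.


Open Scope C_scope.

Theorem lemma2p5 (m : C -> C) (beta : C) (n : nat) :
  Hol m -> m 0 <> 0 -> Cmod beta = 1%R ->
  (forall k : nat, (1 <= k <= n)%nat -> Cpow beta k <> 1) ->
  forall k : nat, (1 <= k <= n)%nat ->
    ~ (exists f : C -> C, Hol f /\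
         forall z : C, in_disc z ->
           Cpow beta k * m 0 * f z - Top m beta f z = e k z).
Proof.
  intros Hm Hm0 Hb Hbk k Hk [f [Hf E]].
  assert (Hf' : forall z, (Cmod z < 1)%R -> exists d, is_derive (K:=C_AbsRing) (V:=C_NormedModule) f z d).
  { intros z Hz. exact (Hf z Hz). }
  destruct (taylor f Hf' (S k)) as [A [K HT]].
  assert (Hmd : exists dm, Dif m (RtoC 0) dm).
  { destruct (Hm (RtoC 0)) as [dm Hdm]. unfold in_disc. rewrite Cmod_0. lra.
    exists dm. apply Dif_of_derive. exact Hdm. }
  assert (HE : forall z, (Cmod z < 1)%R ->
    Cminus (Cmult (Cmult (Cpow beta k) (m (RtoC 0))) (f z)) (Cmult (m z) (f (Cmult beta z))) = Cpow z k).
  { intros z Hz. exact (E z Hz). }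
  apply (final_contra m f beta k A K Hmd Hb HE HT). lia. exact Hm0.
  intros j Hj Heq.
  assert (Hbj : Cpow beta j <> RtoC 0).
  { intro Z. pose proof (Cmod_pow beta j) as P. rewrite Z, Cmod_0, Hb, pow1 in P. lra. }
  apply (Hbk (k - j)%nat). lia.
  replace k with ((k - j) + j)%nat in Heq by lia.
  rewrite Cpow_add_r in Heq.
  replace (Cpow beta (k - j)) with (Cmult (Cmult (Cpow beta (k - j)) (Cpow beta j)) (Cinv (Cpow beta j))) by (field; auto).
  rewrite Heq. field. auto.
Qed.
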